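(* Let $w:\mathbb{Z}\to\mathbb{R}$ be a weight with $w(n)\geq 1$ for all $n$ and $\sup_{n\in\mathbb{Z}}\big(|\tfrac{w(n+1)}{w(n)}|+|\tfrac{w(n)}{w(n+1)}|\big)<\infty$. Fix $1\leq p\leq\infty$ and let $\alpha_0,\beta_0,\tilde\alpha_0,\tilde\beta_0:\mathbb{Z}\to\mathbb{C}$ be bounded sequences such that \begin{itemize} \item if $1\leq p<\infty$: $\|(\alpha_0,\beta_0)\|_{w,2p}<\infty$, $\|(\alpha_0-\alpha_0^+,\beta_0-\beta_0^+)\|_{w,p}<\infty$, and $\|(\tilde\alpha_0,\tilde\beta_0)\|_{w,p}<\infty$; \item if $p=\infty$: $\|(\alpha_0,\beta_0)\|_{w,\infty}<\infty$, $\|(\alpha_0-\alpha_0^+,\beta_0-\beta_0^+)\|_{w^2,\infty}<\infty$, and $\|(\tilde\alpha_0,\tilde\beta_0)\|_{w^2,\infty}<\infty$. \end{itemize} Let $(\alpha(t),\beta(t))$, $t\in(-T,T)$, be the unique (local, bounded) solution of the Ablowitz--Ladik system \[ -i\alpha_t-(1-\alpha\beta)(\alpha^-+\alpha^+)+2\alpha=0,\qquad -i\beta_t+(1-\alpha\beta)(\beta^-+\beta^+)-2\beta=0 \] with initial conditions $\alpha(0)=\alpha_0+\tilde\alpha_0$, $\beta(0)=\beta_0+\tilde\beta_0$. Then this solution is of the form $\alpha(t)=\alpha_0+\tilde\alpha(t)$, $\beta(t)=\beta_0+\tilde\beta(t)$, where for all $t\in(-T,T)$ one has $\|(\tilde\alpha(t),\tilde\beta(t))\|_{w,p}<\infty$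 if $1\leq p<\infty$, respectively $\|(\tilde\alpha(t),\tilde\beta(t))\|_{w^2,\infty}<\infty$ if $p=\infty$.
   Context: Here $\alpha=\alpha(n,t)$, $\beta=\beta(n,t)$, $(n,t)\in\mathbb{Z}\times\mathbb{R}$, are complex-valued, and for a sequence $f$ we write $f^\pm(n)=f(n\pm1)$ (also $f^\pm(n,t)=f(n\pm1,t)$). For a weight $v:\mathbb{Z}\to[1,\infty)$ and pairs of sequences $(\alpha,\beta)$ define \[ \|(\alpha,\beta)\|_{v,p}=\Big(\sum_{n\in\mathbb{Z}} v(n)\big(|\alpha(n)|^p+|\beta(n)|^p\big)\Big)^{1/p}\ (1\leq p<\infty),\qquad \|(\alpha,\beta)\|_{v,\infty}=\sup_{n\in\mathbb{Z}} v(n)\big(|\alpha(n)|+|\beta(n)|\big). \] $w^2$ denotes the weight $n\mapsto w(n)^2$. $T>0$ denotes the length of the existence interval of the local solution of the initial value problem (solutions are $C^1$ in $t$ with values in bounded sequences). *)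

(* Defs.v *)
From Stdlib Require Import Reals ZArith Lra.
From Coquelicot Require Import Coquelicot.
Open Scope R_scope.

(* |x|^q for x >= 0 and real q >= 1, with the convention 0^q = 0
   (Stdlib's Rpower 0 q would be 1). *)
Definition rpow (x q : R) : R := if Rle_dec x 0 then 0 else Rpower x q.

Definition summableZ (f : Z -> R) : Prop :=
  exists M : R, forall N : nat,
    sum_f_R0 (fun k => f (Z.of_nat k) + f (- Z.of_nat k - 1)%Z) N <= M.

Definition bounded_seq (f : Z -> C) : Prop :=
  exists M : R, forall n, Cmod (f n) <= M.

(* ||(a,b)||_{v,p} < oo, for p in [1,oo] (p : Rbar; m_infty never used). *)
Definition wnorm_finite (v : Z -> R) (p : Rbar) (a b : Z -> C) : Prop :=
  match p with
  | Finite q => summableZ (fun n => v n * (rpow (Cmod (a n)) q + rpow (Cmod (b n)) q))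
  | _ => exists M : R, forall n, v n * (Cmod (a n) + Cmod (b n)) <= M
  end.

Definition shiftp (f : Z -> C) : Z -> C := fun n => f (n + 1)%Z.
Definition shiftm (f : Z -> C) : Z -> C := fun n => f (n - 1)%Z.

(* t |-> u(.,t) is C^1 from (-T,T) into l^oo(Z), with derivative u'. *)
Definition C1_linf (T : R) (u u' : Z -> R -> C) : Prop :=
  (forall t, -T < t < T -> bounded_seq (fun n => u n t) /\ bounded_seq (fun n => u' n t)) /\
  (forall t, -T < t < T -> forall eps, 0 < eps -> exists delta, 0 < delta /\
     forall h, h <> 0 -> Rabs h < delta -> -T < t + h < T ->
       forall n, Cmod (Cminus (Cmult (RtoC (/ h)) (Cminus (u n (t + h)) (u n t))) (u' n t)) <= eps) /\
  (forall t, -T < t < T -> forall eps, 0 < eps -> exists delta, 0 < delta /\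
     forall s, Rabs (s - t) < delta -> -T < s < T ->
       forall n, Cmod (Cminus (u' n s) (u' n t)) <= eps).

Definition AL_solution (T : R) (a b : Z -> R -> C) : Prop :=
  exists a' b' : Z -> R -> C,
    C1_linf T a a' /\ C1_linf T b b' /\
    forall n t, -T < t < T ->
      Cplus (Cminus (Cmult (Copp Ci) (a' n t))
                    (Cmult (Cminus (RtoC 1) (Cmult (a n t) (b n t)))
                           (Cplus (a (n - 1)%Z t) (a (n + 1)%Z t))))
            (Cmult (RtoC 2) (a n t)) = RtoC 0 /\
      Cminus (Cplus (Cmult (Copp Ci) (b' n t))
                    (Cmult (Cminus (RtoC 1) (Cmult (a n t) (b n t)))
                           (Cplus (b (n - 1)%Z t) (b (n + 1)%Z t))))
            (Cmult (RtoC 2) (b n t)) = RtoC 0.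

(* Main.v *)
Require Import Defs.
From Stdlib Require Import Reals ZArith Lra Lia Classical.
From Coquelicot Require Import Coquelicot.
Open Scope R_scope.

Fixpoint Isum (f : Z -> R) (m : Z) (L : nat) : R :=
  match L with O => 0 | S L' => Isum f m L' + f (m + Z.of_nat L')%Z end.

Lemma Isum_ext f g m L : (forall n, f n = g n) -> Isum f m L = Isum g m L.
Proof. intros H; induction L; simpl; [lra| rewrite IHL, H; lra]. Qed.

Lemma Isum_le f g m L : (forall n, f n <= g n) -> Isum f m L <= Isum g m L.
Proof. intros H; induction L; simpl; [lra| specialize (H (m + Z.of_nat L)%Z); lra]. Qed.

Lemma Isum_nonneg f m L : (forall n, 0 <= f n) -> 0 <= Isum f m L.
Proof. intros H; induction L; simpl; [lra| specialize (H (m + Z.of_nat L)%Z); lra]. Qed.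

Lemma Isum_plus f g m L : Isum (fun n => f n + g n) m L = Isum f m L + Isum g m L.
Proof. induction L; simpl; [lra| rewrite IHL; lra]. Qed.

Lemma Isum_scal c f m L : Isum (fun n => c * f n) m L = c * Isum f m L.
Proof. induction L; simpl; [lra| rewrite IHL; lra]. Qed.

Lemma Isum_cons f m L : Isum f m (S L) = f m + Isum f (m+1) L.
Proof.
  induction L.
  - simpl. rewrite Z.add_0_r. lra.
  - change (Isum f m (S (S L))) with (Isum f m (S L) + f (m + Z.of_nat (S L))%Z).
    rewrite IHL. change (Isum f (m+1) (S L)) with (Isum f (m+1) L + f (m + 1 + Z.of_nat L)%Z).
    replace (m + Z.of_nat (S L))%Z with (m + 1 + Z.of_nat L)%Z by lia. lra.
Qed.

Lemma Isum_shift f s m L : Isum (fun n => f (n + s)%Z) m L = Isum f (m + s) L.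
Proof.
  induction L; simpl; [lra|]. rewrite IHL.
  replace (m + Z.of_nat L + s)%Z with (m + s + Z.of_nat L)%Z by lia. lra.
Qed.

Lemma Isum_monoL f m L k : (forall n, 0 <= f n) -> Isum f m L <= Isum f m (L + k).
Proof.
  intros H; induction k.
  - rewrite Nat.add_0_r; lra.
  - rewrite Nat.add_succ_r. simpl. specialize (H (m + Z.of_nat (L + k))%Z). lra.
Qed.

Definition Wsum (f : Z -> R) (N : nat) : R := Isum f (- Z.of_nat N) (2 * N + 1).

Lemma Wsum_nonneg f N : (forall n, 0 <= f n) -> 0 <= Wsum f N.
Proof. intros; apply Isum_nonneg; auto. Qed.

Lemma Wsum_succ_eq f N :
  Wsum f (S N) = f (- Z.of_nat N - 1)%Z + f (- Z.of_nat N)%Z + Isum f (- Z.of_nat N + 1) (2*N+1).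
Proof.
  unfold Wsum. replace (2 * S N + 1)%nat with (S (S (2 * N + 1))) by lia.
  rewrite Isum_cons, Isum_cons.
  replace (- Z.of_nat (S N))%Z with (- Z.of_nat N - 1)%Z by lia.
  replace (- Z.of_nat N - 1 + 1)%Z with (- Z.of_nat N)%Z by lia. lra.
Qed.

Lemma Wsum_shiftp_le f N : (forall n, 0 <= f n) ->
  Wsum (fun n => f (n + 1)%Z) N <= Wsum f (S N).
Proof.
  intros H. rewrite Wsum_succ_eq. unfold Wsum. rewrite Isum_shift.
  pose proof (H (- Z.of_nat N - 1)%Z). pose proof (H (- Z.of_nat N)%Z). lra.
Qed.

Lemma Wsum_shiftm_le f N : (forall n, 0 <= f n) ->
  Wsum (fun n => f (n - 1)%Z) N <= Wsum f (S N).
Proof.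
  intros H. unfold Wsum.
  rewrite (Isum_ext _ (fun n => f (n + (-1))%Z)) by (intros; f_equal; lia).
  rewrite Isum_shift.
  replace (- Z.of_nat (S N))%Z with (- Z.of_nat N + -1)%Z by lia.
  replace (2 * S N + 1)%nat with ((2 * N + 1) + 2)%nat by lia.
  apply Isum_monoL; auto.
Qed.

Lemma Wsum_mono f N : (forall n, 0 <= f n) -> Wsum f N <= Wsum f (S N).
Proof.
  intros H. rewrite Wsum_succ_eq. unfold Wsum.
  replace (2 * N + 1)%nat with (S (2 * N)) at 1 by lia. rewrite Isum_cons.
  assert (Isum f (- Z.of_nat N + 1) (2 * N) <= Isum f (- Z.of_nat N + 1) (2 * N + 1))
    by (apply Isum_monoL; auto).
  pose proof (H (- Z.of_nat N - 1)%Z). lra.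
Qed.

Lemma sum_f_Isum f N :
  sum_f_R0 (fun k => f (Z.of_nat k) + f (- Z.of_nat k - 1)%Z) N = Isum f (- Z.of_nat N - 1) (2 * N + 2).
Proof.
  induction N.
  - simpl. lra.
  - rewrite tech5, IHN.
    replace (2 * S N + 2)%nat with (S (S (2 * N + 2))) by lia.
    rewrite Isum_cons.
    replace (- Z.of_nat (S N) - 1 + 1)%Z with (- Z.of_nat N - 1)%Z by lia.
    change (Isum f (-Z.of_nat N - 1) (S (2*N+2))) with
      (Isum f (-Z.of_nat N -1) (2*N+2) + f (-Z.of_nat N - 1 + Z.of_nat (2*N+2))%Z).
    replace (- Z.of_nat N - 1 + Z.of_nat (2 * N + 2))%Z with (Z.of_nat (S N)) by lia.
    lra.
Qed.

Definition Sbdd (f : Z -> R) := exists M, forall N, Wsum f N <= M.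

Lemma summableZ_Sbdd f : (forall n, 0 <= f n) -> summableZ f -> Sbdd f.
Proof.
  intros H [M HM]. exists M. intros N. specialize (HM N). rewrite sum_f_Isum in HM.
  unfold Wsum. replace (2 * N + 2)%nat with (S (2 * N + 1)) in HM by lia.
  rewrite Isum_cons in HM. replace (- Z.of_nat N - 1 + 1)%Z with (- Z.of_nat N)%Z in HM by lia.
  pose proof (H (- Z.of_nat N - 1)%Z). lra.
Qed.

Lemma Sbdd_summableZ f : (forall n, 0 <= f n) -> Sbdd f -> summableZ f.
Proof.
  intros H [M HM]. exists M. intros N. specialize (HM (S N)). rewrite sum_f_Isum.
  unfold Wsum in HM. replace (- Z.of_nat (S N))%Z with (- Z.of_nat N - 1)%Z in HM by lia.
  replace (2 * S N + 1)%nat with ((2 * N + 2) + 1)%nat in HM by lia.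
  pose proof (Isum_monoL f (- Z.of_nat N - 1) (2*N+2) 1 H). lra.
Qed.

Lemma rpow_pos x q : 0 < x -> rpow x q = Rpower x q.
Proof. intros H; unfold rpow; destruct (Rle_dec x 0); [lra|auto]. Qed.

Lemma rpow_nonpos x q : x <= 0 -> rpow x q = 0.
Proof. intros H; unfold rpow; destruct (Rle_dec x 0); [auto|lra]. Qed.

Lemma rpow_ge0 x q : 0 <= rpow x q.
Proof. unfold rpow; destruct (Rle_dec x 0); [lra|unfold Rpower; left; apply exp_pos]. Qed.

Lemma rpow_le x y q : 0 <= q -> 0 <= x <= y -> rpow x q <= rpow y q.
Proof.
  intros Hq [H1 H2]. destruct (Req_dec x 0) as [->|Hx].
  - rewrite rpow_nonpos by lra. apply rpow_ge0.
  - rewrite !rpow_pos by lra. apply Rle_Rpower_l; lra.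
Qed.

Lemma rpow_mult x y q : 0 <= x -> 0 <= y -> rpow (x * y) q = rpow x q * rpow y q.
Proof.
  intros Hx Hy. destruct (Req_dec x 0) as [->|Hx'].
  { rewrite Rmult_0_l, rpow_nonpos by lra. lra. }
  destruct (Req_dec y 0) as [->|Hy'].
  { rewrite Rmult_0_r, (rpow_nonpos 0) by lra. lra. }
  rewrite !rpow_pos by (try apply Rmult_lt_0_compat; lra).
  rewrite Rpower_mult_distr; lra.
Qed.

Lemma rpow_2_ge1 q : 0 <= q -> 1 <= rpow 2 q.
Proof.
  intros Hq. rewrite rpow_pos by lra.
  replace 1 with (Rpower 2 0) by (rewrite Rpower_O; lra).
  apply Rle_Rpower; lra.
Qed.

Lemma rpow_plus_le x y q : 0 <= q -> 0 <= x -> 0 <= y ->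
  rpow (x + y) q <= rpow 2 q * (rpow x q + rpow y q).
Proof.
  intros Hq Hx Hy.
  assert (H1 : rpow (x + y) q <= rpow (2 * Rmax x y) q).
  { apply rpow_le; auto. split; [lra|]. pose proof (Rmax_l x y); pose proof (Rmax_r x y). lra. }
  rewrite rpow_mult in H1 by (try lra; pose proof (Rmax_l x y); lra).
  assert (H2 : rpow (Rmax x y) q <= rpow x q + rpow y q).
  { unfold Rmax; destruct (Rle_dec x y); pose proof (rpow_ge0 x q); pose proof (rpow_ge0 y q); lra. }
  pose proof (rpow_ge0 2 q). nra.
Qed.

Lemma rpow_sq x q : 0 <= x -> rpow (x * x) q = rpow x (2 * q).
Proof.
  intros Hx. rewrite rpow_mult by auto. destruct (Req_dec x 0) as [->|H].
  - rewrite !rpow_nonpos by lra. lra.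
  - rewrite !rpow_pos by lra. replace (2 * q) with (q + q) by lra. rewrite Rpower_plus. auto.
Qed.

Lemma rpow_small e q : 0 <= e <= 1 -> 1 <= q -> rpow e q <= e.
Proof.
  intros He Hq. destruct (Req_dec e 0) as [->|H].
  - rewrite rpow_nonpos by lra. lra.
  - rewrite rpow_pos by lra. replace q with (1 + (q - 1)) by lra.
    rewrite Rpower_plus, Rpower_1 by lra.
    assert (Rpower e (q - 1) <= Rpower 1 (q - 1)) by (apply Rle_Rpower_l; lra).
    assert (Rpower 1 (q - 1) = 1) by (unfold Rpower; rewrite ln_1, Rmult_0_r, exp_0; auto).
    assert (0 < Rpower e (q-1)) by (unfold Rpower; apply exp_pos). nra.
Qed.

Lemma rpow_id1 x : 0 <= x -> rpow x 1 = x.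
Proof.
  intros Hx. destruct (Req_dec x 0) as [->|H]. rewrite rpow_nonpos; lra.
  rewrite rpow_pos by lra. apply Rpower_1; lra.
Qed.

Definition Lp (v : Z -> R) (p : Rbar) (f : Z -> R) : Prop :=
  match p with
  | Finite q => Sbdd (fun n => v n * rpow (f n) q)
  | _ => exists M, forall n, v n * f n <= M
  end.

Definition wok (v : Z -> R) (c : R) : Prop :=
  (forall n, 0 < v n) /\ 1 <= c /\ (forall n, v (n + 1)%Z <= c * v n) /\
  (forall n, v n <= c * v (n + 1)%Z).

Lemma Lp_mono v p f g : (forall n, 0 <= v n) -> Rbar_le (Finite 1) p ->
  (forall n, 0 <= f n <= g n) -> Lp v p g -> Lp v p f.
Proof.
  intros Hv Hp Hfg. destruct p as [q| |]; simpl in *; intros [M HM]; exists M.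
  - intros N. eapply Rle_trans; [|apply HM]. apply Isum_le. intros n.
    apply Rmult_le_compat_l; auto. apply rpow_le; [lra|apply Hfg].
  - intros n. eapply Rle_trans; [|apply HM]. apply Rmult_le_compat_l; auto. apply Hfg.
  - intros n. eapply Rle_trans; [|apply HM]. apply Rmult_le_compat_l; auto. apply Hfg.
Qed.

Lemma Lp_plus v p f g : (forall n, 0 <= v n) -> Rbar_le (Finite 1) p ->
  (forall n, 0 <= f n) -> (forall n, 0 <= g n) ->
  Lp v p f -> Lp v p g -> Lp v p (fun n => f n + g n).
Proof.
  intros Hv Hp Hf Hg. destruct p as [q| |]; simpl in *; intros [M1 H1] [M2 H2].
  - exists (rpow 2 q * M1 + rpow 2 q * M2). intros N.
    eapply Rle_trans.
    { apply (Isum_le _ (fun n => rpow 2 q * (v n * rpow (f n) q) + rpow 2 q * (v n * rpow (g n) q))).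
      intros n. pose proof (rpow_plus_le (f n) (g n) q ltac:(lra) (Hf n) (Hg n)).
      pose proof (Hv n). nra. }
    rewrite Isum_plus, !Isum_scal. specialize (H1 N); specialize (H2 N).
    unfold Wsum in *. pose proof (rpow_ge0 2 q). nra.
  - exists (M1 + M2). intros n. specialize (H1 n); specialize (H2 n). nra.
  - exists (M1 + M2). intros n. specialize (H1 n); specialize (H2 n). nra.
Qed.

Lemma Lp_scal v p c f : (forall n, 0 <= v n) -> Rbar_le (Finite 1) p -> 0 <= c ->
  (forall n, 0 <= f n) -> Lp v p f -> Lp v p (fun n => c * f n).
Proof.
  intros Hv Hp Hc Hf. destruct p as [q| |]; simpl in *; intros [M H].
  - exists (rpow c q * M). intros N. unfold Wsum.
    rewrite (Isum_ext _ (fun n => rpow c q * (v n * rpow (f n) q))).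
    + rewrite Isum_scal. specialize (H N). unfold Wsum in *. pose proof (rpow_ge0 c q). nra.
    + intros n. rewrite rpow_mult by auto. ring.
  - exists (c * M). intros n. specialize (H n). nra.
  - exists (c * M). intros n. specialize (H n). nra.
Qed.

Lemma Lp_shiftp v c p f : wok v c -> Rbar_le (Finite 1) p ->
  (forall n, 0 <= f n) -> Lp v p f -> Lp v p (fun n => f (n + 1)%Z).
Proof.
  intros (Hv & Hc & H1 & H2) Hp Hf. destruct p as [q| |]; simpl in *; intros [M H].
  - exists (c * M). intros N.
    eapply Rle_trans.
    { apply (Isum_le _ (fun n => c * (v (n+1)%Z * rpow (f (n+1)%Z) q))).
      intros n. pose proof (rpow_ge0 (f (n+1)%Z) q). specialize (H2 n). nra. }
    rewrite Isum_scal. fold (Wsum (fun n => v (n+1)%Z * rpow (f (n+1)%Z) q) N).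
    pose proof (Wsum_shiftp_le (fun n => v n * rpow (f n) q) N) as HW.
    simpl in HW. assert (HW' := HW (fun n => Rmult_le_pos _ _ (Rlt_le _ _ (Hv n)) (rpow_ge0 _ _))).
    specialize (H (S N)). nra.
  - exists (c * M). intros n. specialize (H (n+1)%Z). specialize (H2 n). pose proof (Hf (n+1)%Z). nra.
  - exists (c * M). intros n. specialize (H (n+1)%Z). specialize (H2 n). pose proof (Hf (n+1)%Z). nra.
Qed.

Lemma Lp_shiftm v c p f : wok v c -> Rbar_le (Finite 1) p ->
  (forall n, 0 <= f n) -> Lp v p f -> Lp v p (fun n => f (n - 1)%Z).
Proof.
  intros (Hv & Hc & H1 & H2) Hp Hf.
  assert (H1' : forall n, v n <= c * v (n - 1)%Z).
  { intros n. specialize (H1 (n-1)%Z). replace (n - 1 + 1)%Z with n in H1 by lia. auto. }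
  destruct p as [q| |]; simpl in *; intros [M H].
  - exists (c * M). intros N.
    eapply Rle_trans.
    { apply (Isum_le _ (fun n => c * (v (n-1)%Z * rpow (f (n-1)%Z) q))).
      intros n. pose proof (rpow_ge0 (f (n-1)%Z) q). specialize (H1' n). nra. }
    rewrite Isum_scal. fold (Wsum (fun n => v (n-1)%Z * rpow (f (n-1)%Z) q) N).
    pose proof (Wsum_shiftm_le (fun n => v n * rpow (f n) q) N) as HW.
    simpl in HW. assert (HW' := HW (fun n => Rmult_le_pos _ _ (Rlt_le _ _ (Hv n)) (rpow_ge0 _ _))).
    specialize (H (S N)). nra.
  - exists (c * M). intros n. specialize (H (n-1)%Z). specialize (H1' n). pose proof (Hf (n-1)%Z). nra.
  - exists (c * M). intros n. specialize (H (n-1)%Z). specialize (H1' n). pose proof (Hf (n-1)%Z). nra.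
Qed.

Lemma lim_half x a b : 0 <= b -> (forall k, x <= a + b * (/2) ^ k) -> x <= a.
Proof.
  intros Hb H. destruct (Rle_dec x a) as [|Hn]; auto. exfalso.
  destruct (Req_dec b 0) as [->|Hb0].
  { specialize (H O). lra. }
  destruct (pow_lt_1_zero (/2) ltac:(rewrite Rabs_pos_eq; lra) ((x - a) / b)) as [N HN].
  { apply Rdiv_lt_0_compat; lra. }
  specialize (HN N (Nat.le_refl _)). specialize (H N).
  rewrite Rabs_pos_eq in HN by (apply pow_le; lra).
  apply (Rmult_lt_compat_l b) in HN; [|lra].
  replace (b * ((x - a) / b)) with (x - a) in HN by (field; lra). lra.
Qed.

Lemma iter_nat (F : nat -> R) A mu D r :
  0 <= A -> 0 <= mu -> mu <= /2 -> 0 <= r -> mu * r <= /2 -> 0 <= D ->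
  (forall N, F N <= A + mu * F (S N)) -> (forall N, F N <= D * r ^ N) ->
  forall N, F N <= 2 * A.
Proof.
  intros HA Hm Hm2 Hr Hmr HD Hrec Hg.
  assert (Hk : forall k N, F N <= 2 * A + mu ^ k * F (N + k)%nat).
  { induction k; intros N.
    - simpl. rewrite Nat.add_0_r. lra.
    - specialize (IHk (S N)). specialize (Hrec N).
      replace (N + S k)%nat with (S N + k)%nat by lia. simpl.
      assert (mu * F (S N) <= mu * (2 * A + mu ^ k * F (S N + k)%nat)) by (apply Rmult_le_compat_l; lra).
      assert (mu * A <= /2 * A) by (apply Rmult_le_compat_r; lra).
      change (S N + k)%nat with (S (N + k)) in *.
      rewrite Rmult_assoc. nra. }
  intros N. apply (lim_half _ _ (D * r ^ N)).
  { apply Rmult_le_pos; auto. apply pow_le; auto. }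
  intros k. specialize (Hk k N). specialize (Hg (N + k)%nat).
  assert (mu ^ k * F (N + k)%nat <= mu ^ k * (D * r ^ (N + k))) by (apply Rmult_le_compat_l; [apply pow_le|]; auto).
  assert ((mu * r) ^ k <= (/2) ^ k) by (apply pow_incr; nra).
  rewrite pow_add in H. rewrite Rpow_mult_distr in H0.
  assert (0 <= D * r ^ N) by (apply Rmult_le_pos; auto; apply pow_le; auto).
  nra.
Qed.

Lemma iter_Z (z : Z -> R) A mu1 c D :
  0 <= A -> 0 <= mu1 -> 1 <= c -> mu1 * (2 * c + 1) <= /2 -> mu1 * (2 * c + 1) * c <= /2 -> 0 <= D ->
  (forall n, z n <= A + mu1 * (c * z (n - 1)%Z + z n + c * z (n + 1)%Z)) ->
  (forall n, z n <= D * c ^ (Z.abs_nat n)) ->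
  forall n, z n <= 2 * A.
Proof.
  intros HA Hm Hc Hm2 Hmr HD Hrec Hg. set (mu := mu1 * (2 * c + 1)) in *.
  assert (Hk : forall k n, z n <= 2 * A + mu ^ k * (D * c ^ (Z.abs_nat n + k))).
  { induction k; intros n.
    - simpl. rewrite Nat.add_0_r. specialize (Hg n). lra.
    - assert (Hb : forall m, (Z.abs_nat m <= S (Z.abs_nat n))%nat ->
         z m <= 2 * A + mu ^ k * (D * c ^ (Z.abs_nat n + S k))).
      { intros m Hm'. eapply Rle_trans; [apply IHk|].
        apply Rplus_le_compat_l. apply Rmult_le_compat_l; [apply pow_le; unfold mu; nra|].
        apply Rmult_le_compat_l; auto. apply Rle_pow; auto. lia. }
      pose proof (Hb (n-1)%Z ltac:(lia)). pose proof (Hb n ltac:(lia)). pose proof (Hb (n+1)%Z ltac:(lia)).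
      specialize (Hrec n).
      set (E := mu ^ k * (D * c ^ (Z.abs_nat n + S k))) in *.
      assert (0 <= E) by (unfold E; apply Rmult_le_pos; [apply pow_le; unfold mu; nra|apply Rmult_le_pos; auto; apply pow_le; lra]).
      assert (mu1 * (c * z (n - 1)%Z + z n + c * z (n + 1)%Z) <= mu1 * (c * (2*A+E) + (2*A+E) + c * (2*A+E))).
      { apply Rmult_le_compat_l; auto. nra. }
      assert (mu ^ S k * (D * c ^ (Z.abs_nat n + S k)) = mu * E) by (unfold E; simpl; ring).
      rewrite H4. unfold mu in *. nra. }
  intros n. apply (lim_half _ _ (D * c ^ Z.abs_nat n)).
  { apply Rmult_le_pos; auto. apply pow_le; lra. }
  intros k. specialize (Hk k n).
  assert ((mu * c) ^ k <= (/2) ^ k) by (apply pow_incr; unfold mu in *; split; nra).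
  rewrite pow_add in Hk. rewrite Rpow_mult_distr in H.
  assert (0 <= D * c ^ Z.abs_nat n) by (apply Rmult_le_pos; auto; apply pow_le; lra).
  nra.
Qed.

Lemma wok_growth v c : wok v c -> forall n, v n <= v 0%Z * c ^ (Z.abs_nat n).
Proof.
  intros (Hv & Hc & H1 & H2).
  assert (Hp : forall k, v (Z.of_nat k) <= v 0%Z * c ^ k).
  { induction k; [simpl; lra|]. rewrite Nat2Z.inj_succ. unfold Z.succ.
    change (c ^ S k) with (c * c ^ k).
    specialize (H1 (Z.of_nat k)). specialize (Hv (Z.of_nat k)). nra. }
  assert (Hm : forall k, v (- Z.of_nat k)%Z <= v 0%Z * c ^ k).
  { induction k; [simpl; lra|]. change (c ^ S k) with (c * c ^ k).
    specialize (H2 (- Z.of_nat (S k))%Z).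
    replace (- Z.of_nat (S k) + 1)%Z with (- Z.of_nat k)%Z in H2 by lia. nra. }
  intros n. destruct (Z_le_gt_dec 0 n).
  - replace n with (Z.of_nat (Z.abs_nat n)) at 1 by lia. apply Hp.
  - replace n with (- Z.of_nat (Z.abs_nat n))%Z at 1 by lia. apply Hm.
Qed.

Lemma Wsum_succ f N : Wsum f (S N) = f (- Z.of_nat N - 1)%Z + Wsum f N + f (Z.of_nat N + 1)%Z.
Proof.
  rewrite Wsum_succ_eq. unfold Wsum.
  replace (2 * N + 1)%nat with (S (2 * N)) by lia. rewrite (Isum_cons f (- Z.of_nat N)%Z).
  change (Isum f (- Z.of_nat N + 1) (S (2 * N))) with
    (Isum f (- Z.of_nat N + 1) (2 * N) + f (- Z.of_nat N + 1 + Z.of_nat (2 * N))%Z).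
  replace (- Z.of_nat N + 1 + Z.of_nat (2 * N))%Z with (Z.of_nat N + 1)%Z by lia. lra.
Qed.

Lemma Wsum_growth z D c : 1 <= c -> 0 <= D -> (forall n, z n <= D * c ^ (Z.abs_nat n)) ->
  forall N, Wsum z N <= D * (3 * c) ^ N.
Proof.
  intros Hc HD Hz. induction N.
  - unfold Wsum. simpl. specialize (Hz 0%Z). simpl in Hz. lra.
  - rewrite Wsum_succ. pose proof (Hz (- Z.of_nat N - 1)%Z). pose proof (Hz (Z.of_nat N + 1)%Z).
    replace (Z.abs_nat (- Z.of_nat N - 1)) with (S N) in H by lia.
    replace (Z.abs_nat (Z.of_nat N + 1)) with (S N) in H0 by lia.
    assert (1 <= 3 ^ N) by (apply pow_R1_Rle; lra).
    assert (1 <= c ^ N) by (apply pow_R1_Rle; lra).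
    rewrite Rpow_mult_distr in *. simpl in *.
    set (a := 3 ^ N) in *. set (b := c ^ N) in *.
    assert (0 <= D * a * b) by (apply Rmult_le_pos; [apply Rmult_le_pos|]; lra).
    assert (0 <= D * c * b) by (apply Rmult_le_pos; [apply Rmult_le_pos|]; lra).
    assert (D * a * b <= D * a * b * c) by (apply Rle_trans with (D*a*b*1); [lra| apply Rmult_le_compat_l; lra]).
    assert (D * c * b <= D * c * b * a) by (apply Rle_trans with (D*c*b*1); [lra| apply Rmult_le_compat_l; lra]).
    nra.
Qed.

Lemma Wsum_lin a b c f g h k N :
  Wsum (fun n => a * f n + b * (c * g n + h n + c * k n)) N =
  a * Wsum f N + b * (c * Wsum g N + Wsum h N + c * Wsum k N).
Proof.
  unfold Wsum. generalize (- Z.of_nat N)%Z (2 * N + 1)%nat. intros m L.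
  induction L; simpl; [ring|]. rewrite IHL. ring.
Qed.

Lemma rpow4 a b1 b2 b3 q : 0 <= q -> 0 <= a -> 0 <= b1 -> 0 <= b2 -> 0 <= b3 ->
  rpow (a + (b1 + (b2 + b3))) q <=
  rpow 2 q * rpow 2 q * rpow 2 q * (rpow a q + (rpow b1 q + rpow b2 q + rpow b3 q)).
Proof.
  intros Hq Ha H1 H2 H3. set (C2 := rpow 2 q).
  assert (1 <= C2) by (apply rpow_2_ge1; auto).
  pose proof (rpow_plus_le a (b1 + (b2 + b3)) q Hq Ha ltac:(lra)).
  pose proof (rpow_plus_le b1 (b2 + b3) q Hq H1 ltac:(lra)).
  pose proof (rpow_plus_le b2 b3 q Hq H2 H3).
  pose proof (rpow_ge0 a q). pose proof (rpow_ge0 b1 q). pose proof (rpow_ge0 b2 q).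
  pose proof (rpow_ge0 b3 q). pose proof (rpow_ge0 (b2+b3) q). pose proof (rpow_ge0 (b1 + (b2+b3)) q).
  fold C2 in H0, H4, H5.
  assert (C2 * rpow (b2 + b3) q <= C2 * (C2 * (rpow b2 q + rpow b3 q))) by (apply Rmult_le_compat_l; lra).
  assert (rpow (b1 + (b2 + b3)) q <= C2 * C2 * (rpow b1 q + rpow b2 q + rpow b3 q)).
  { assert (C2 * rpow b1 q <= C2 * C2 * rpow b1 q) by (apply Rmult_le_compat_r; nra). nra. }
  assert (C2 * rpow (b1 + (b2 + b3)) q <= C2 * (C2 * C2 * (rpow b1 q + rpow b2 q + rpow b3 q))) by (apply Rmult_le_compat_l; lra).
  assert (C2 * rpow a q <= C2 * C2 * C2 * rpow a q).
  { assert (1 <= C2 * C2) by nra. assert (0 <= C2 * rpow a q) by nra.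
    replace (C2 * C2 * C2 * rpow a q) with ((C2 * C2) * (C2 * rpow a q)) by ring. nra. }
  nra.
Qed.

Lemma Lp_fix v c p : wok v c -> Rbar_le (Finite 1) p ->
  exists e0, 0 < e0 /\ forall e y h, 0 <= e <= e0 ->
    (forall n, 0 <= y n) -> (forall n, 0 <= h n) -> (exists Y, forall n, y n <= Y) ->
    Lp v p h -> (forall n, y n <= h n + e * (y (n - 1)%Z + y n + y (n + 1)%Z)) ->
    Lp v p y.
Proof.
  intros Hw Hp. pose proof Hw as (Hv & Hc & H1 & H2).
  assert (H1' : forall n, v n <= c * v (n - 1)%Z).
  { intros n. specialize (H1 (n-1)%Z). replace (n - 1 + 1)%Z with n in H1 by lia. auto. }
  destruct p as [q| |]; simpl in Hp |- *.
  - set (C2 := rpow 2 q). assert (HC2 : 1 <= C2) by (apply rpow_2_ge1; lra).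
    set (K3 := C2 * C2 * C2). assert (HK3 : 1 <= K3) by (unfold K3; nra).
    exists (/ (K3 * (2 * c + 1) * (6 * c))). split.
    { apply Rinv_0_lt_compat. apply Rmult_lt_0_compat; [apply Rmult_lt_0_compat|]; lra. }
    intros e y h He Hy Hh [Y HY] [Mh HMh] Hrec.
    assert (HY0 : 0 <= Y) by (specialize (HY 0%Z); specialize (Hy 0%Z); lra).
    assert (Hprod : 0 < K3 * (2 * c + 1) * (6 * c)) by (apply Rmult_lt_0_compat; [apply Rmult_lt_0_compat|]; lra).
    assert (Hee : e * (K3 * (2 * c + 1) * (6 * c)) <= 1).
    { destruct He as [He0 He1]. apply Rmult_le_compat_r with (r := K3 * (2 * c + 1) * (6 * c)) in He1; [|lra].
      rewrite Rinv_l in He1; lra. }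
    assert (He1 : e <= 1) by nra.
    set (re := rpow e q).
    assert (Hre : 0 <= re <= e) by (split; [apply rpow_ge0|apply rpow_small; lra]).
    set (z := fun n => v n * rpow (y n) q).
    assert (Hz0 : forall n, 0 <= z n) by (intros n; unfold z; apply Rmult_le_pos; [left; auto|apply rpow_ge0]).
    assert (Hpt : forall n, z n <= K3 * (v n * rpow (h n) q) + (K3 * re) * (c * z (n - 1)%Z + z n + c * z (n + 1)%Z)).
    { intros n. unfold z.
      assert (Hyn : rpow (y n) q <= K3 * (rpow (h n) q + re * (rpow (y (n-1)%Z) q + rpow (y n) q + rpow (y (n+1)%Z) q))).
      { eapply Rle_trans.
        { apply (rpow_le _ (h n + (e * y (n - 1)%Z + (e * y n + e * y (n + 1)%Z)))); [lra|].
          split; auto. specialize (Hrec n). lra. }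
        eapply Rle_trans.
        { apply rpow4; try lra; auto; apply Rmult_le_pos; lra || auto. }
        fold C2. fold K3. rewrite !rpow_mult by (lra || auto). fold re. right; ring. }
      pose proof (rpow_ge0 (y (n-1)%Z) q). pose proof (rpow_ge0 (y (n+1)%Z) q).
      pose proof (rpow_ge0 (y n) q). pose proof (rpow_ge0 (h n) q).
      assert (0 <= K3 * re) by nra.
      specialize (H1' n). specialize (H2 n). pose proof (Hv n).
      assert (v n * rpow (y n) q <= v n * (K3 * (rpow (h n) q + re * (rpow (y (n-1)%Z) q + rpow (y n) q + rpow (y (n+1)%Z) q))))
        by (apply Rmult_le_compat_l; lra).
      assert (v n * rpow (y (n - 1)%Z) q <= c * v (n - 1)%Z * rpow (y (n - 1)%Z) q) by nra.
      assert (v n * rpow (y (n + 1)%Z) q <= c * v (n + 1)%Z * rpow (y (n + 1)%Z) q) by nra.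
      assert (K3 * re * (v n * rpow (y (n - 1)%Z) q) <= K3 * re * (c * v (n - 1)%Z * rpow (y (n - 1)%Z) q))
        by (apply Rmult_le_compat_l; lra).
      assert (K3 * re * (v n * rpow (y (n + 1)%Z) q) <= K3 * re * (c * v (n + 1)%Z * rpow (y (n + 1)%Z) q))
        by (apply Rmult_le_compat_l; lra).
      nra. }
    set (mu := K3 * re * (2 * c + 1)).
    assert (Hmu : mu * (6 * c) <= 1).
    { unfold mu. assert (K3 * re * (2 * c + 1) * (6*c) <= K3 * e * (2 * c + 1) * (6*c)).
      { repeat apply Rmult_le_compat_r; lra || nra. }
      nra. }
    assert (HMh0 : 0 <= Mh).
    { eapply Rle_trans; [|apply (HMh O)]. apply Wsum_nonneg. intros n. apply Rmult_le_pos; [left; auto|apply rpow_ge0]. }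
    exists (2 * (K3 * Mh)).
    apply (iter_nat (Wsum z) (K3 * Mh) mu (v 0%Z * rpow Y q) (3 * c)).
    + nra.
    + unfold mu. assert (0 <= K3 * re) by nra. nra.
    + nra.
    + lra.
    + nra.
    + pose proof (Hv 0%Z); pose proof (rpow_ge0 Y q); nra.
    + intros N. eapply Rle_trans; [apply (Isum_le _ _ _ _ Hpt)|].
      fold (Wsum (fun n => K3 * (v n * rpow (h n) q) + K3 * re * (c * z (n - 1)%Z + z n + c * z (n + 1)%Z)) N).
      rewrite Wsum_lin.
      pose proof (Wsum_shiftm_le z N Hz0). pose proof (Wsum_shiftp_le z N Hz0). pose proof (Wsum_mono z N Hz0).
      specialize (HMh N). assert (0 <= K3 * re) by nra. unfold mu.
      assert (K3 * re * (c * Wsum (fun n => z (n - 1)%Z) N + Wsum z N + c * Wsum (fun n => z (n + 1)%Z) N)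
              <= K3 * re * (c * Wsum z (S N) + Wsum z (S N) + c * Wsum z (S N))).
      { apply Rmult_le_compat_l; auto. nra. }
      nra.
    + apply Wsum_growth; [lra| pose proof (Hv 0%Z); pose proof (rpow_ge0 Y q); nra |].
      intros n. unfold z. pose proof (wok_growth v c Hw n).
      assert (rpow (y n) q <= rpow Y q) by (apply rpow_le; [lra|split; auto]).
      pose proof (rpow_ge0 (y n) q). pose proof (Hv n). pose proof (pow_le c (Z.abs_nat n) ltac:(lra)).
      assert (v n * rpow (y n) q <= v 0%Z * c ^ Z.abs_nat n * rpow Y q).
      { apply Rmult_le_compat; lra. }
      nra.
  -
    exists (/ ((2 * c + 1) * (2 * c))). split.
    { apply Rinv_0_lt_compat. apply Rmult_lt_0_compat; lra. }
    intros e y h He Hy Hh [Y HY] [Mh HMh] Hrec.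
    assert (HY0 : 0 <= Y) by (specialize (HY 0%Z); specialize (Hy 0%Z); lra).
    assert (Hee : e * ((2 * c + 1) * (2 * c)) <= 1).
    { destruct He as [He0 He1]. apply Rmult_le_compat_r with (r := (2 * c + 1) * (2 * c)) in He1; [|nra].
      rewrite Rinv_l in He1; nra. }
    set (z := fun n => v n * y n).
    assert (HMh0 : 0 <= Mh) by (specialize (HMh 0%Z); specialize (Hv 0%Z); specialize (Hh 0%Z); nra).
    exists (2 * Mh). intros n.
    apply (iter_Z z Mh e c (v 0%Z * Y)); try lra; try nra.
    + pose proof (Hv 0%Z); nra.
    + intros m. unfold z. specialize (Hrec m). specialize (HMh m).
      specialize (H1' m). specialize (H2 m). pose proof (Hv m). pose proof (Hy (m-1)%Z). pose proof (Hy (m+1)%Z).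
      pose proof (Hy m).
      assert (v m * y m <= v m * (h m + e * (y (m - 1)%Z + y m + y (m + 1)%Z))) by (apply Rmult_le_compat_l; lra).
      assert (e * (v m * y (m - 1)%Z) <= e * (c * v (m - 1)%Z * y (m - 1)%Z)) by (apply Rmult_le_compat_l; nra).
      assert (e * (v m * y (m + 1)%Z) <= e * (c * v (m + 1)%Z * y (m + 1)%Z)) by (apply Rmult_le_compat_l; nra).
      nra.
    + intros m. unfold z. pose proof (wok_growth v c Hw m). pose proof (Hv m). pose proof (Hy m). specialize (HY m).
      pose proof (pow_le c (Z.abs_nat m) ltac:(lra)).
      assert (v m * y m <= v 0%Z * c ^ Z.abs_nat m * Y) by (apply Rmult_le_compat; lra). nra.
  -
    destruct Hp.
Qed.

Definition dq_ok (T : R) (u u' : R -> C) : Prop :=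
  forall t, -T < t < T -> forall eps, 0 < eps -> exists delta, 0 < delta /\
     forall h, h <> 0 -> Rabs h < delta -> -T < t + h < T ->
       Cmod (Cminus (Cmult (RtoC (/ h)) (Cminus (u (t + h)) (u t))) (u' t)) <= eps.

Lemma C1_dq T u u' n : C1_linf T u u' -> dq_ok T (u n) (u' n).
Proof.
  intros [_ [H _]] t Ht eps He. destruct (H t Ht eps He) as [d [Hd Hh]].
  exists d; split; auto.
Qed.

Lemma abs_fst_le z : Rabs (fst z) <= Cmod z.
Proof. pose proof (Rmax_Cmod z). pose proof (Rmax_l (Rabs (fst z)) (Rabs (snd z))). lra. Qed.
Lemma abs_snd_le z : Rabs (snd z) <= Cmod z.
Proof. pose proof (Rmax_Cmod z). pose proof (Rmax_r (Rabs (fst z)) (Rabs (snd z))). lra. Qed.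

Lemma dq_comp T u u' t (g : C -> R) :
  (forall x y, g (Cplus x y) = g x + g y) -> (forall r x, g (Cmult (RtoC r) x) = r * g x) ->
  (forall x, g (Copp x) = - g x) -> (forall z, Rabs (g z) <= Cmod z) ->
  dq_ok T u u' -> -T < t < T -> derivable_pt_lim (fun s => g (u s)) t (g (u' t)).
Proof.
  intros Hp Hm Ho Hb H Ht eps He.
  destruct (H t Ht (eps/2) ltac:(lra)) as [d [Hd Hh]].
  assert (Hpos : 0 < Rmin d (Rmin (t + T) (T - t))).
  { apply Rmin_pos; [lra| apply Rmin_pos; lra]. }
  exists (mkposreal _ Hpos). intros h Hh0 Hhl. simpl in Hhl.
  assert (Hr1 := Rmin_l d (Rmin (t + T) (T - t))).
  assert (Hr2 := Rmin_r d (Rmin (t + T) (T - t))).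
  assert (Hr3 := Rmin_l (t + T) (T - t)). assert (Hr4 := Rmin_r (t + T) (T - t)).
  pose proof (Rle_abs h); pose proof (Rabs_maj2 h).
  specialize (Hh h Hh0 ltac:(lra) ltac:(split; lra)).
  eapply Rle_lt_trans; [|instantiate (1 := eps/2); lra].
  eapply Rle_trans; [|apply Hh]. eapply Rle_trans; [|apply Hb]. right. f_equal.
  unfold Cminus. rewrite Hp, Ho, Hm, Hp, Ho. unfold Rdiv. ring.
Qed.

Lemma deriv_fst T u u' t : dq_ok T u u' -> -T < t < T ->
  derivable_pt_lim (fun s => fst (u s)) t (fst (u' t)).
Proof.
  intros. apply (dq_comp T u u' t (fun z => fst z)); [intros [] []; simpl; ring | intros r []; simpl; ring | intros []; simpl; ring | apply abs_fst_le | auto | auto].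
Qed.

Lemma deriv_snd T u u' t : dq_ok T u u' -> -T < t < T ->
  derivable_pt_lim (fun s => snd (u s)) t (snd (u' t)).
Proof.
  intros. apply (dq_comp T u u' t (fun z => snd z)); [intros [] []; simpl; ring | intros r []; simpl; ring | intros []; simpl; ring | apply abs_snd_le | auto | auto].
Qed.

Lemma MVT_R (f f' : R -> R) a b K : a <= b ->
  (forall c, a <= c <= b -> derivable_pt_lim f c (f' c)) -> (forall c, a <= c <= b -> Rabs (f' c) <= K) ->
  Rabs (f b - f a) <= K * (b - a).
Proof.
  intros Hab Hd Hk. destruct (Req_dec a b) as [<-|Hne].
  - replace (f a - f a) with 0 by ring. rewrite Rabs_R0. specialize (Hk a ltac:(lra)).
    pose proof (Rabs_pos (f' a)). nra.
  - destruct (MVT_cor2 f f' a b ltac:(lra) Hd) as [c [Hc1 Hc2]]. rewrite Hc1.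
    rewrite Rabs_mult, (Rabs_pos_eq (b - a)) by lra. specialize (Hk c ltac:(lra)).
    apply Rmult_le_compat_r; lra.
Qed.

Lemma sqrt2_le2 : sqrt 2 <= 2.
Proof. pose proof (sqrt_sqrt 2 ltac:(lra)). pose proof (sqrt_pos 2). nra. Qed.

Lemma Cmod_le_2max z M : Rabs (fst z) <= M -> Rabs (snd z) <= M -> Cmod z <= 2 * M.
Proof.
  intros H1 H2. eapply Rle_trans; [apply Cmod_2Rmax|].
  assert (Rmax (Rabs (fst z)) (Rabs (snd z)) <= M) by (apply Rmax_lub; auto).
  pose proof (Rmax_l (Rabs (fst z)) (Rabs (snd z))). pose proof (Rabs_pos (fst z)).
  pose proof sqrt2_le2. pose proof (sqrt_pos 2). nra.
Qed.

Lemma MVT_C T u u' s1 s2 K : dq_ok T u u' -> -T < s1 < T -> -T < s2 < T -> 0 <= K ->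
  (forall r, Rmin s1 s2 <= r <= Rmax s1 s2 -> Cmod (u' r) <= K) ->
  Cmod (Cminus (u s2) (u s1)) <= 2 * (K * Rabs (s2 - s1)).
Proof.
  intros Hd H1 H2 HK Hb.
  assert (Hgen : forall a b, Rmin s1 s2 <= a -> b <= Rmax s1 s2 -> a <= b ->
            Rabs (fst (u b) - fst (u a)) <= K * (b - a) /\ Rabs (snd (u b) - snd (u a)) <= K * (b - a)).
  { intros a b Ha Hb' Hab.
    assert (Hin : forall c, a <= c <= b -> -T < c < T).
    { intros c Hc. pose proof (Rmin_l s1 s2). pose proof (Rmin_r s1 s2).
      pose proof (Rmax_l s1 s2). pose proof (Rmax_r s1 s2).
      unfold Rmin, Rmax in *. destruct (Rle_dec s1 s2); lra. }
    split.
    - apply (MVT_R (fun s => fst (u s)) (fun s => fst (u' s))); auto.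
      + intros c Hc. apply (deriv_fst T); auto.
      + intros c Hc. eapply Rle_trans; [apply abs_fst_le|]. apply Hb; lra.
    - apply (MVT_R (fun s => snd (u s)) (fun s => snd (u' s))); auto.
      + intros c Hc. apply (deriv_snd T); auto.
      + intros c Hc. eapply Rle_trans; [apply abs_snd_le|]. apply Hb; lra. }
  apply Cmod_le_2max.
  - destruct (Rle_dec s1 s2).
    + destruct (Hgen s1 s2) as [Ha _]; try (unfold Rmin, Rmax; destruct (Rle_dec s1 s2); lra).
      simpl. rewrite (Rabs_pos_eq (s2 - s1)) by lra. replace (fst (u s2) + - fst (u s1)) with (fst (u s2) - fst (u s1)) by ring. auto.
    + destruct (Hgen s2 s1) as [Ha _]; try (unfold Rmin, Rmax; destruct (Rle_dec s1 s2); lra).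
      simpl. rewrite Rabs_minus_sym in Ha. rewrite (Rabs_left (s2 - s1)) by lra.
      replace (fst (u s2) + - fst (u s1)) with (fst (u s2) - fst (u s1)) by ring. lra.
  - destruct (Rle_dec s1 s2).
    + destruct (Hgen s1 s2) as [_ Ha]; try (unfold Rmin, Rmax; destruct (Rle_dec s1 s2); lra).
      simpl. rewrite (Rabs_pos_eq (s2 - s1)) by lra. replace (snd (u s2) + - snd (u s1)) with (snd (u s2) - snd (u s1)) by ring. auto.
    + destruct (Hgen s2 s1) as [_ Ha]; try (unfold Rmin, Rmax; destruct (Rle_dec s1 s2); lra).
      simpl. rewrite Rabs_minus_sym in Ha. rewrite (Rabs_left (s2 - s1)) by lra.
      replace (snd (u s2) + - snd (u s1)) with (snd (u s2) - snd (u s1)) by ring. lra.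
Qed.

Lemma local_bound T u u' t0 : C1_linf T u u' -> -T < t0 < T ->
  exists rho B, 0 < rho /\ forall s, Rabs (s - t0) < rho -> (-T < s < T) /\ forall n, Cmod (u n s) <= B.
Proof.
  intros HC Ht. pose proof HC as [Hb [Hd _]].
  destruct (Hb t0 Ht) as [[M0 HM0] [M1 HM1]]. cbv beta in HM0, HM1.
  destruct (Hd t0 Ht 1 ltac:(lra)) as [d [Hd0 Hh]].
  set (rho := Rmin d (Rmin (t0 + T) (T - t0))).
  assert (Hr1 := Rmin_l d (Rmin (t0 + T) (T - t0))).
  assert (Hr2 := Rmin_r d (Rmin (t0 + T) (T - t0))).
  assert (Hr3 := Rmin_l (t0 + T) (T - t0)). assert (Hr4 := Rmin_r (t0 + T) (T - t0)).
  assert (Hrho : 0 < rho) by (apply Rmin_pos; [lra| apply Rmin_pos; lra]).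
  assert (HM1p : 0 <= M1) by (pose proof (HM1 0%Z); pose proof (Cmod_ge_0 (u' 0%Z t0)); lra).
  exists rho, (M0 + rho * (M1 + 1)). split; auto. intros s Hs.
  fold rho in Hr1, Hr2.
  pose proof (Rle_abs (s - t0)); pose proof (Rabs_maj2 (s - t0)).
  split; [lra|]. intros n.
  destruct (Req_dec (s - t0) 0) as [Hz0|Hz0].
  - replace s with t0 by lra. specialize (HM0 n). nra.
  - set (h := s - t0) in *. specialize (Hh h Hz0 ltac:(lra) ltac:(lra) n).
    replace (t0 + h) with s in Hh by (unfold h; ring).
    set (Q := Cmult (RtoC (/ h)) (Cminus (u n s) (u n t0))) in *.
    assert (HQ : Cmod Q <= M1 + 1).
    { replace Q with (Cplus (Cminus Q (u' n t0)) (u' n t0)) by ring.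
      eapply Rle_trans; [apply Cmod_triangle|]. specialize (HM1 n). lra. }
    assert (Hus : u n s = Cplus (u n t0) (Cmult (RtoC h) Q)).
    { unfold Q. rewrite Cmult_assoc, <- RtoC_mult, Rinv_r by auto. ring. }
    rewrite Hus. eapply Rle_trans; [apply Cmod_triangle|].
    rewrite Cmod_mult, Cmod_R. specialize (HM0 n).
    assert (Rabs h * Cmod Q <= rho * (M1 + 1)).
    { apply Rmult_le_compat; try lra; try apply Rabs_pos; apply Cmod_ge_0. }
    lra.
Qed.

Lemma Cmod_minus_le x y : Cmod (Cminus x y) <= Cmod x + Cmod y.
Proof. unfold Cminus. eapply Rle_trans; [apply Cmod_triangle|]. rewrite Cmod_opp. lra. Qed.

Lemma Cmod_minus_sym x y : Cmod (Cminus x y) = Cmod (Cminus y x).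
Proof. replace (Cminus x y) with (Copp (Cminus y x)) by ring. apply Cmod_opp. Qed.

Lemma Cmod_mult3 x y z : Cmod (Cmult (Cmult x y) z) = Cmod x * Cmod y * Cmod z.
Proof. rewrite !Cmod_mult. ring. Qed.

Lemma prod3_le x y z Bd : 0 <= Bd -> Cmod y <= Bd -> Cmod z <= Bd ->
  Cmod x * Cmod y * Cmod z <= Bd * Bd * Cmod x.
Proof.
  intros HB Hy Hz. pose proof (Cmod_ge_0 x). pose proof (Cmod_ge_0 y). pose proof (Cmod_ge_0 z).
  assert (Cmod y * Cmod z <= Bd * Bd) by (apply Rmult_le_compat; lra).
  replace (Cmod x * Cmod y * Cmod z) with (Cmod x * (Cmod y * Cmod z)) by ring. nra.
Qed.

Lemma key (A Bv Am Ap A0 B0 A0m A0p : C) Bd : 0 <= Bd ->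
  Cmod A <= Bd -> Cmod Bv <= Bd -> Cmod Am <= Bd -> Cmod Ap <= Bd ->
  Cmod A0 <= Bd -> Cmod B0 <= Bd -> Cmod A0m <= Bd -> Cmod A0p <= Bd ->
  Cmod (Cminus (Cmult (Cminus (RtoC 1) (Cmult A Bv)) (Cplus Am Ap)) (Cmult (RtoC 2) A)) <=
  Cmod (Cminus A0m A0) + Cmod (Cminus A0p A0) + 2 * Bd * (Cmod A0 * Cmod B0) +
  (2 + 2 * (Bd * Bd)) * (Cmod (Cminus Am A0m) + Cmod (Cminus A A0) + Cmod (Cminus Ap A0p) + Cmod (Cminus Bv B0)).
Proof.
  intros HB H1 H2 H3 H4 H5 H6 H7 H8.
  set (ea := Cminus A A0). set (eb := Cminus Bv B0). set (em := Cminus Am A0m). set (ep := Cminus Ap A0p).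
  set (t1 := Cplus (Cminus A0m A0) (Cminus A0p A0)).
  set (t2 := Cminus (Cplus em ep) (Cmult (RtoC 2) ea)).
  set (t3 := Cplus (Cplus (Cmult (Cmult ea Bv) Am) (Cmult (Cmult A0 eb) Am)) (Cmult (Cmult A0 B0) em)).
  set (t4 := Cplus (Cplus (Cmult (Cmult ea Bv) Ap) (Cmult (Cmult A0 eb) Ap)) (Cmult (Cmult A0 B0) ep)).
  set (t5 := Cmult (Cmult A0 B0) (Cplus A0m A0p)).
  replace (Cminus (Cmult (Cminus (RtoC 1) (Cmult A Bv)) (Cplus Am Ap)) (Cmult (RtoC 2) A))
    with (Cminus (Cminus (Cminus (Cplus t1 t2) t3) t4) t5)
    by (unfold t1, t2, t3, t4, t5, ea, eb, em, ep; ring).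
  assert (Ht1 : Cmod t1 <= Cmod (Cminus A0m A0) + Cmod (Cminus A0p A0)) by apply Cmod_triangle.
  assert (Ht2 : Cmod t2 <= Cmod em + Cmod ep + 2 * Cmod ea).
  { unfold t2. eapply Rle_trans; [apply Cmod_minus_le|].
    rewrite Cmod_mult, Cmod_R, Rabs_pos_eq by lra. pose proof (Cmod_triangle em ep). lra. }
  assert (Ht3 : Cmod t3 <= Bd * Bd * (Cmod ea + Cmod eb + Cmod em)).
  { unfold t3. eapply Rle_trans; [apply Cmod_triangle|].
    eapply Rle_trans; [apply Rplus_le_compat_r; apply Cmod_triangle|].
    rewrite !Cmod_mult3.
    pose proof (prod3_le ea Bv Am Bd HB H2 H3).
    assert (Cmod A0 * Cmod eb * Cmod Am <= Bd * Bd * Cmod eb).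
    { replace (Cmod A0 * Cmod eb * Cmod Am) with (Cmod eb * Cmod A0 * Cmod Am) by ring. apply prod3_le; auto. }
    assert (Cmod A0 * Cmod B0 * Cmod em <= Bd * Bd * Cmod em).
    { replace (Cmod A0 * Cmod B0 * Cmod em) with (Cmod em * Cmod A0 * Cmod B0) by ring. apply prod3_le; auto. }
    lra. }
  assert (Ht4 : Cmod t4 <= Bd * Bd * (Cmod ea + Cmod eb + Cmod ep)).
  { unfold t4. eapply Rle_trans; [apply Cmod_triangle|].
    eapply Rle_trans; [apply Rplus_le_compat_r; apply Cmod_triangle|].
    rewrite !Cmod_mult3.
    pose proof (prod3_le ea Bv Ap Bd HB H2 H4).
    assert (Cmod A0 * Cmod eb * Cmod Ap <= Bd * Bd * Cmod eb).
    { replace (Cmod A0 * Cmod eb * Cmod Ap) with (Cmod eb * Cmod A0 * Cmod Ap) by ring. apply prod3_le; auto. }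
    assert (Cmod A0 * Cmod B0 * Cmod ep <= Bd * Bd * Cmod ep).
    { replace (Cmod A0 * Cmod B0 * Cmod ep) with (Cmod ep * Cmod A0 * Cmod B0) by ring. apply prod3_le; auto. }
    lra. }
  assert (Ht5 : Cmod t5 <= 2 * Bd * (Cmod A0 * Cmod B0)).
  { unfold t5. rewrite Cmod_mult, Cmod_mult. pose proof (Cmod_triangle A0m A0p).
    pose proof (Cmod_ge_0 A0). pose proof (Cmod_ge_0 B0).
    assert (0 <= Cmod A0 * Cmod B0) by nra. nra. }
  pose proof (Cmod_minus_le (Cminus (Cminus (Cplus t1 t2) t3) t4) t5).
  pose proof (Cmod_minus_le (Cminus (Cplus t1 t2) t3) t4).
  pose proof (Cmod_minus_le (Cplus t1 t2) t3).
  pose proof (Cmod_triangle t1 t2).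
  pose proof (Cmod_ge_0 ea). pose proof (Cmod_ge_0 eb). pose proof (Cmod_ge_0 em). pose proof (Cmod_ge_0 ep).
  assert (0 <= Bd * Bd) by nra.
  assert (Bd * Bd * Cmod ea <= (Bd * Bd) * Cmod ea) by lra.
  nra.
Qed.

Lemma eqA_mod (a' P a : C) :
  Cplus (Cminus (Cmult (Copp Ci) a') P) (Cmult (RtoC 2) a) = RtoC 0 ->
  Cmod a' = Cmod (Cminus P (Cmult (RtoC 2) a)).
Proof.
  intros H. assert (E : Cmult (Copp Ci) a' = Cminus P (Cmult (RtoC 2) a)).
  { replace (Cmult (Copp Ci) a') with (Cplus (Cplus (Cminus (Cmult (Copp Ci) a') P) (Cmult (RtoC 2) a)) (Cminus P (Cmult (RtoC 2) a))) by ring.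
    rewrite H. ring. }
  rewrite <- E, Cmod_mult, Cmod_opp, Cmod_Ci. ring.
Qed.

Lemma eqB_mod (b' P b : C) :
  Cminus (Cplus (Cmult (Copp Ci) b') P) (Cmult (RtoC 2) b) = RtoC 0 ->
  Cmod b' = Cmod (Cminus P (Cmult (RtoC 2) b)).
Proof.
  intros H. assert (E : Cmult (Copp Ci) b' = Copp (Cminus P (Cmult (RtoC 2) b))).
  { replace (Cmult (Copp Ci) b') with (Cplus (Cminus (Cplus (Cmult (Copp Ci) b') P) (Cmult (RtoC 2) b)) (Copp (Cminus P (Cmult (RtoC 2) b)))) by ring.
    rewrite H. ring. }
  rewrite <- (Cmod_opp (Cminus P _)), <- E, Cmod_mult, Cmod_opp, Cmod_Ci. ring.
Qed.

Definition Xf (a b : Z -> R -> C) (a0 b0 : Z -> C) (t : R) (n : Z) : R :=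
  Cmod (Cminus (a n t) (a0 n)) + Cmod (Cminus (b n t) (b0 n)).

Definition Dd (a0 b0 : Z -> C) (Bd : R) (n : Z) : R :=
  Cmod (Cminus (a0 (n - 1)%Z) (a0 n)) + Cmod (Cminus (a0 (n + 1)%Z) (a0 n)) +
  Cmod (Cminus (b0 (n - 1)%Z) (b0 n)) + Cmod (Cminus (b0 (n + 1)%Z) (b0 n)) +
  2 * Bd * (Cmod (a0 n) * Cmod (b0 n)).

Definition ALeq (a b a' b' : Z -> R -> C) (n : Z) (t : R) : Prop :=
      Cplus (Cminus (Cmult (Copp Ci) (a' n t))
                    (Cmult (Cminus (RtoC 1) (Cmult (a n t) (b n t)))
                           (Cplus (a (n - 1)%Z t) (a (n + 1)%Z t))))
            (Cmult (RtoC 2) (a n t)) = RtoC 0 /\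
      Cminus (Cplus (Cmult (Copp Ci) (b' n t))
                    (Cmult (Cminus (RtoC 1) (Cmult (a n t) (b n t)))
                           (Cplus (b (n - 1)%Z t) (b (n + 1)%Z t))))
            (Cmult (RtoC 2) (b n t)) = RtoC 0.

Lemma Xf_nonneg a b a0 b0 t n : 0 <= Xf a b a0 b0 t n.
Proof. unfold Xf. pose proof (Cmod_ge_0 (Cminus (a n t) (a0 n))). pose proof (Cmod_ge_0 (Cminus (b n t) (b0 n))). lra. Qed.

Lemma Dd_nonneg a0 b0 Bd n : 0 <= Bd -> 0 <= Dd a0 b0 Bd n.
Proof.
  intros H. unfold Dd.
  repeat match goal with |- context [Cmod ?x] => pose proof (Cmod_ge_0 x); fail | _ => idtac end.
  pose proof (Cmod_ge_0 (Cminus (a0 (n - 1)%Z) (a0 n))). pose proof (Cmod_ge_0 (Cminus (a0 (n + 1)%Z) (a0 n))).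
  pose proof (Cmod_ge_0 (Cminus (b0 (n - 1)%Z) (b0 n))). pose proof (Cmod_ge_0 (Cminus (b0 (n + 1)%Z) (b0 n))).
  pose proof (Cmod_ge_0 (a0 n)). pose proof (Cmod_ge_0 (b0 n)).
  assert (0 <= Cmod (a0 n) * Cmod (b0 n)) by nra. nra.
Qed.

Lemma deriv_bound a b a' b' a0 b0 n t Bd : ALeq a b a' b' n t -> 0 <= Bd ->
  (forall m, Cmod (a m t) <= Bd /\ Cmod (b m t) <= Bd) ->
  (forall m, Cmod (a0 m) <= Bd /\ Cmod (b0 m) <= Bd) ->
  Cmod (a' n t) <= Dd a0 b0 Bd n + (2 + 2 * (Bd * Bd)) *
      (Xf a b a0 b0 t (n - 1)%Z + Xf a b a0 b0 t n + Xf a b a0 b0 t (n + 1)%Z) /\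
  Cmod (b' n t) <= Dd a0 b0 Bd n + (2 + 2 * (Bd * Bd)) *
      (Xf a b a0 b0 t (n - 1)%Z + Xf a b a0 b0 t n + Xf a b a0 b0 t (n + 1)%Z).
Proof.
  intros [Ea Eb] HB Hb Hb0. unfold Xf, Dd.
  destruct (Hb n) as [H1 H2]. destruct (Hb (n-1)%Z) as [H3 H4]. destruct (Hb (n+1)%Z) as [H5 H6].
  destruct (Hb0 n) as [H7 H8]. destruct (Hb0 (n-1)%Z) as [H9 H10]. destruct (Hb0 (n+1)%Z) as [H11 H12].
  assert (0 <= 2 + 2 * (Bd * Bd)) by nra.
  pose proof (Cmod_ge_0 (Cminus (a (n - 1)%Z t) (a0 (n - 1)%Z))).
  pose proof (Cmod_ge_0 (Cminus (a (n + 1)%Z t) (a0 (n + 1)%Z))).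
  pose proof (Cmod_ge_0 (Cminus (a n t) (a0 n))).
  pose proof (Cmod_ge_0 (Cminus (b (n - 1)%Z t) (b0 (n - 1)%Z))).
  pose proof (Cmod_ge_0 (Cminus (b (n + 1)%Z t) (b0 (n + 1)%Z))).
  pose proof (Cmod_ge_0 (Cminus (b n t) (b0 n))).
  pose proof (Cmod_ge_0 (Cminus (a0 (n - 1)%Z) (a0 n))). pose proof (Cmod_ge_0 (Cminus (a0 (n + 1)%Z) (a0 n))).
  pose proof (Cmod_ge_0 (Cminus (b0 (n - 1)%Z) (b0 n))). pose proof (Cmod_ge_0 (Cminus (b0 (n + 1)%Z) (b0 n))).
  split.
  - rewrite (eqA_mod _ _ _ Ea).
    eapply Rle_trans; [apply (key _ _ _ _ (a0 n) (b0 n) (a0 (n-1)%Z) (a0 (n+1)%Z) Bd); auto|].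
    set (K := 2 + 2 * (Bd * Bd)) in *. rewrite !Rmult_plus_distr_l.
    assert (0 <= K * Cmod (Cminus (b (n - 1)%Z t) (b0 (n - 1)%Z))) by (apply Rmult_le_pos; lra).
    assert (0 <= K * Cmod (Cminus (b (n + 1)%Z t) (b0 (n + 1)%Z))) by (apply Rmult_le_pos; lra).
    lra.
  - rewrite (eqB_mod _ _ _ Eb). rewrite (Cmult_comm (a n t) (b n t)).
    eapply Rle_trans; [apply (key _ _ _ _ (b0 n) (a0 n) (b0 (n-1)%Z) (b0 (n+1)%Z) Bd); auto|].
    set (K := 2 + 2 * (Bd * Bd)) in *. rewrite (Rmult_comm (Cmod (b0 n))). rewrite !Rmult_plus_distr_l.
    assert (0 <= K * Cmod (Cminus (a (n - 1)%Z t) (a0 (n - 1)%Z))) by (apply Rmult_le_pos; lra).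
    assert (0 <= K * Cmod (Cminus (a (n + 1)%Z t) (a0 (n + 1)%Z))) by (apply Rmult_le_pos; lra).
    lra.
Qed.

Lemma step T a b a' b' a0 b0 V c p e0 Bd lo hi s1 :
  (forall n, dq_ok T (a n) (a' n)) -> (forall n, dq_ok T (b n) (b' n)) ->
  (forall n t, -T < t < T -> ALeq a b a' b' n t) ->
  wok V c -> Rbar_le (Finite 1) p ->
  (forall e y h, 0 <= e <= e0 -> (forall n, 0 <= y n) -> (forall n, 0 <= h n) ->
     (exists Y, forall n, y n <= Y) -> Lp V p h ->
     (forall n, y n <= h n + e * (y (n - 1)%Z + y n + y (n + 1)%Z)) -> Lp V p y) ->
  0 <= Bd -> -T < lo -> hi < T -> lo <= s1 <= hi ->
  (forall s, lo <= s <= hi -> forall m, Cmod (a m s) <= Bd /\ Cmod (b m s) <= Bd) ->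
  (forall m, Cmod (a0 m) <= Bd /\ Cmod (b0 m) <= Bd) ->
  4 * (hi - lo) * (2 + 2 * (Bd * Bd)) <= e0 ->
  Lp V p (Dd a0 b0 Bd) -> Lp V p (Xf a b a0 b0 s1) ->
  forall s, lo <= s <= hi -> Lp V p (Xf a b a0 b0 s).
Proof.
  intros Hda Hdb Heq Hw Hp Hfix HB Hlo Hhi Hs1 Hbd Hbd0 Hlen HD HE.
  pose proof Hw as (Hv & Hc & _ & _).
  assert (Hv' : forall n, 0 <= V n) by (intros n; left; auto).
  set (x := fun m s => Cmod (Cminus (a m s) (a m s1)) + Cmod (Cminus (b m s) (b m s1))).
  assert (Hx0 : forall m s, 0 <= x m s).
  { intros m s. unfold x. pose proof (Cmod_ge_0 (Cminus (a m s) (a m s1))).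
    pose proof (Cmod_ge_0 (Cminus (b m s) (b m s1))). lra. }
  assert (HxB : forall m s, lo <= s <= hi -> x m s <= 4 * Bd).
  { intros m s Hs. unfold x. pose proof (Cmod_minus_le (a m s) (a m s1)).
    pose proof (Cmod_minus_le (b m s) (b m s1)).
    destruct (Hbd s Hs m). destruct (Hbd s1 Hs1 m). lra. }
  set (EE := fun m r => exists s, lo <= s <= hi /\ r = x m s).
  assert (Hbnd : forall m, bound (EE m)).
  { intros m. exists (4 * Bd). intros r [s [Hs ->]]. apply HxB; auto. }
  assert (Hne : forall m, exists r, EE m r).
  { intros m. exists (x m s1). exists s1. split; auto. }
  set (y := fun m => proj1_sig (completeness (EE m) (Hbnd m) (Hne m))).
  assert (Hyl : forall m, is_lub (EE m) (y m)).
  { intros m. unfold y. exact (proj2_sig (completeness (EE m) (Hbnd m) (Hne m))). }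
  assert (Hy_ub : forall m s, lo <= s <= hi -> x m s <= y m).
  { intros m s Hs. destruct (Hyl m) as [H1 _]. apply H1. exists s. split; auto. }
  assert (Hy_lub : forall m M, (forall s, lo <= s <= hi -> x m s <= M) -> y m <= M).
  { intros m M HM. destruct (Hyl m) as [_ H2]. apply H2. intros r [s [Hs ->]]. apply HM; auto. }
  assert (Hy0 : forall m, 0 <= y m).
  { intros m. eapply Rle_trans; [apply (Hx0 m s1)|]. apply Hy_ub; auto. }
  set (K := 2 + 2 * (Bd * Bd)).
  assert (HK : 0 <= K) by (unfold K; nra).
  set (dl := hi - lo).
  assert (Hdl : 0 <= dl) by (unfold dl; lra).
  set (E := Xf a b a0 b0 s1).
  assert (HE0 : forall m, 0 <= E m) by (intros; apply Xf_nonneg).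
  set (h := fun n => 4 * dl * (Dd a0 b0 Bd n + K * (E (n - 1)%Z + E n + E (n + 1)%Z))).
  assert (HXr : forall m r, lo <= r <= hi -> Xf a b a0 b0 r m <= E m + y m).
  { intros m r Hr. unfold Xf, E, Xf.
    replace (Cminus (a m r) (a0 m)) with (Cplus (Cminus (a m r) (a m s1)) (Cminus (a m s1) (a0 m))) by ring.
    replace (Cminus (b m r) (b0 m)) with (Cplus (Cminus (b m r) (b m s1)) (Cminus (b m s1) (b0 m))) by ring.
    pose proof (Cmod_triangle (Cminus (a m r) (a m s1)) (Cminus (a m s1) (a0 m))).
    pose proof (Cmod_triangle (Cminus (b m r) (b m s1)) (Cminus (b m s1) (b0 m))).
    pose proof (Hy_ub m r Hr). unfold x in H1. lra. }
  assert (Hrec : forall n, y n <= h n + (4 * dl * K) * (y (n - 1)%Z + y n + y (n + 1)%Z)).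
  { intros n. apply Hy_lub. intros s Hs.
    set (Kn := Dd a0 b0 Bd n + K * ((E (n-1)%Z + y (n-1)%Z) + (E n + y n) + (E (n+1)%Z + y (n+1)%Z))).
    assert (HKn : 0 <= Kn).
    { unfold Kn. pose proof (Dd_nonneg a0 b0 Bd n HB). pose proof (Hy0 n). pose proof (Hy0 (n-1)%Z).
      pose proof (Hy0 (n+1)%Z). pose proof (HE0 n). pose proof (HE0 (n-1)%Z). pose proof (HE0 (n+1)%Z). nra. }
    assert (Hder : forall r, lo <= r <= hi -> Cmod (a' n r) <= Kn /\ Cmod (b' n r) <= Kn).
    { intros r Hr.
      destruct (deriv_bound a b a' b' a0 b0 n r Bd (Heq n r ltac:(lra)) HB (Hbd r Hr) Hbd0) as [D1 D2].
      pose proof (HXr (n-1)%Z r Hr). pose proof (HXr n r Hr). pose proof (HXr (n+1)%Z r Hr).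
        assert (K * (Xf a b a0 b0 r (n - 1)%Z + Xf a b a0 b0 r n + Xf a b a0 b0 r (n + 1)%Z) <=
                K * ((E (n-1)%Z + y (n-1)%Z) + (E n + y n) + (E (n+1)%Z + y (n+1)%Z))).
      { apply Rmult_le_compat_l; lra. }
      unfold Kn. fold K in D1, D2. split; lra. }
    assert (Hmm : forall r, Rmin s1 s <= r <= Rmax s1 s -> lo <= r <= hi).
    { intros r Hr. unfold Rmin, Rmax in Hr. destruct (Rle_dec s1 s); lra. }
    assert (Hss : Rabs (s - s1) <= dl).
    { unfold dl. apply Rabs_le. lra. }
    pose proof (MVT_C T (a n) (a' n) s1 s Kn (Hda n) ltac:(lra) ltac:(lra) HKn
                  (fun r Hr => proj1 (Hder r (Hmm r Hr)))) as M1.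
    pose proof (MVT_C T (b n) (b' n) s1 s Kn (Hdb n) ltac:(lra) ltac:(lra) HKn
                  (fun r Hr => proj2 (Hder r (Hmm r Hr)))) as M2.
    assert (Kn * Rabs (s - s1) <= Kn * dl) by (apply Rmult_le_compat_l; auto).
    assert (Heqh : h n + 4 * dl * K * (y (n - 1)%Z + y n + y (n + 1)%Z) = 4 * dl * Kn).
    { unfold h, Kn. ring. }
    unfold x. rewrite Heqh. nra. }
  assert (HyL : Lp V p y).
  { apply (Hfix (4 * dl * K) y h).
    - split; [nra|]. unfold dl, K. lra.
    - auto.
    - intros n. unfold h. pose proof (Dd_nonneg a0 b0 Bd n HB).
      pose proof (HE0 n). pose proof (HE0 (n-1)%Z). pose proof (HE0 (n+1)%Z).
      apply Rmult_le_pos; [lra|]. nra.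
    - exists (4 * Bd). intros m. apply Hy_lub. intros; apply HxB; auto.
    - unfold h.
      apply (Lp_scal V p (4 * dl) (fun n => Dd a0 b0 Bd n + K * (E (n - 1)%Z + E n + E (n + 1)%Z))); auto.
      + lra.
      + intros n. pose proof (Dd_nonneg a0 b0 Bd n HB).
        pose proof (HE0 n). pose proof (HE0 (n-1)%Z). pose proof (HE0 (n+1)%Z). nra.
      + apply (Lp_plus V p (Dd a0 b0 Bd) (fun n => K * (E (n - 1)%Z + E n + E (n + 1)%Z))); auto.
        * intros n. apply Dd_nonneg; auto.
        * intros n. pose proof (HE0 n). pose proof (HE0 (n-1)%Z). pose proof (HE0 (n+1)%Z). nra.
        * apply (Lp_scal V p K (fun n => E (n - 1)%Z + E n + E (n + 1)%Z)); auto.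
          -- intros n. pose proof (HE0 n). pose proof (HE0 (n-1)%Z). pose proof (HE0 (n+1)%Z). lra.
          -- apply (Lp_plus V p (fun n => E (n - 1)%Z + E n) (fun n => E (n + 1)%Z)); auto.
             ++ intros n. pose proof (HE0 n). pose proof (HE0 (n-1)%Z). lra.
             ++ apply (Lp_plus V p (fun n => E (n - 1)%Z) E); auto.
                ** apply (Lp_shiftm V c p E); auto.
             ++ apply (Lp_shiftp V c p E); auto.
    - exact Hrec. }
  intros s Hs.
  apply (Lp_mono V p _ (fun n => E n + y n)); auto.
  - intros n. split; [apply Xf_nonneg| apply HXr; auto].
  - apply Lp_plus; auto.
Qed.

Definition locprop (T : R) (G : R -> Prop) : Prop :=
  forall t0, -T < t0 < T -> exists rho, 0 < rho /\
    forall s1 s, Rabs (s1 - t0) < rho -> Rabs (s - t0) < rho -> G s1 -> G s.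

Lemma connect_pos T G t : locprop T G -> G 0 -> 0 <= t < T -> G t.
Proof.
  intros HL H0 Ht.
  set (E := fun u => 0 <= u <= t /\ forall s, 0 <= s <= u -> G s).
  assert (HbE : bound E) by (exists t; intros u [Hu _]; lra).
  assert (HE0 : exists u, E u).
  { exists 0. split; [lra|]. intros s Hs. replace s with 0 by lra. auto. }
  destruct (completeness E HbE HE0) as [sg [Hub Hlub]].
  assert (Hsg0 : 0 <= sg) by (apply Hub; split; [lra|]; intros s Hs; replace s with 0 by lra; auto).
  assert (Hsgt : sg <= t) by (apply Hlub; intros u [Hu _]; lra).
  destruct (HL sg ltac:(lra)) as [rho [Hrho Hloc]].
  assert (Hu : exists u, E u /\ sg - rho < u).
  { destruct (classic (exists u, E u /\ sg - rho < u)) as [|Hn]; auto. exfalso.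
    assert (sg <= sg - rho); [|lra].
    apply Hlub. intros u Hu. destruct (Rle_dec u (sg - rho)); auto. exfalso; apply Hn. exists u. split; auto; lra. }
  destruct Hu as [u [[Hu1 Hu2] Hu3]].
  assert (Hus : u <= sg) by (apply Hub; split; auto).
  assert (Hstar : E (Rmin (sg + rho / 2) t)).
  { pose proof (Rmin_l (sg + rho / 2) t). pose proof (Rmin_r (sg + rho / 2) t).
    split.
    - split; [|lra]. unfold Rmin; destruct (Rle_dec (sg + rho / 2) t); lra.
    - intros s Hs. destruct (Rle_dec s u) as [Hsu|Hsu].
      + apply Hu2. lra.
      + apply (Hloc u s).
        * apply Rabs_def1; lra.
        * apply Rabs_def1; lra.
        * apply Hu2; lra. }
  assert (Hle := Hub _ Hstar).
  destruct (Rle_dec (sg + rho / 2) t) as [Hc|Hc].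
  - rewrite Rmin_left in Hle by lra. lra.
  - rewrite Rmin_right in Hstar by lra. destruct Hstar as [_ Hst]. apply Hst. lra.
Qed.

Lemma connect_all T G t : locprop T G -> G 0 -> -T < t < T -> G t.
Proof.
  intros HL H0 Ht. destruct (Rle_dec 0 t).
  - apply (connect_pos T); auto. lra.
  - assert (HL' : locprop T (fun s => G (- s))).
    { intros t0 Ht0. destruct (HL (- t0) ltac:(lra)) as [rho [Hr Hl]]. exists rho. split; auto.
      intros s1 s H1 H2 H3. apply (Hl (- s1) (- s)); auto.
      - replace (- s1 - - t0) with (- (s1 - t0)) by ring. rewrite Rabs_Ropp. auto.
      - replace (- s - - t0) with (- (s - t0)) by ring. rewrite Rabs_Ropp. auto. }
    replace t with (- (- t)) by ring. apply (connect_pos T (fun s => G (- s))); auto.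
    + replace (- 0) with 0 by ring. auto.
    + lra.
Qed.

Lemma local_prop T a b a' b' a0 b0 V c p :
  C1_linf T a a' -> C1_linf T b b' ->
  (forall n t, -T < t < T -> ALeq a b a' b' n t) ->
  wok V c -> Rbar_le (Finite 1) p ->
  bounded_seq a0 -> bounded_seq b0 ->
  (forall Bd, 0 <= Bd -> Lp V p (Dd a0 b0 Bd)) ->
  locprop T (fun s => Lp V p (Xf a b a0 b0 s)).
Proof.
  intros Ca Cb Heq Hw Hp [Ma HMa] [Mb HMb] HDd t0 Ht0.
  destruct (Lp_fix V c p Hw Hp) as [e0 [He0 Hfix]].
  destruct (local_bound T a a' t0 Ca Ht0) as [ra [Ba [Hra HBa]]].
  destruct (local_bound T b b' t0 Cb Ht0) as [rb [Bb [Hrb HBb]]].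
  set (Bd := Rmax (Rmax Ba Bb) (Rmax (Rmax Ma Mb) 0)).
  assert (HB0 : 0 <= Bd) by (unfold Bd; eapply Rle_trans; [|apply Rmax_r]; apply Rmax_r).
  assert (HBa' : Ba <= Bd) by (unfold Bd; eapply Rle_trans; [|apply Rmax_l]; apply Rmax_l).
  assert (HBb' : Bb <= Bd) by (unfold Bd; eapply Rle_trans; [|apply Rmax_l]; apply Rmax_r).
  assert (HMa' : Ma <= Bd) by (unfold Bd; eapply Rle_trans; [|apply Rmax_r];
                               eapply Rle_trans; [|apply Rmax_l]; apply Rmax_l).
  assert (HMb' : Mb <= Bd) by (unfold Bd; eapply Rle_trans; [|apply Rmax_r];
                               eapply Rle_trans; [|apply Rmax_l]; apply Rmax_r).
  set (K := 2 + 2 * (Bd * Bd)). assert (HK : 2 <= K) by (unfold K; nra).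
  set (rho := Rmin (Rmin ra rb) (e0 / (8 * K))).
  assert (Hr1 : rho <= ra) by (unfold rho; eapply Rle_trans; [apply Rmin_l|]; apply Rmin_l).
  assert (Hr2 : rho <= rb) by (unfold rho; eapply Rle_trans; [apply Rmin_l|]; apply Rmin_r).
  assert (Hr3 : rho <= e0 / (8 * K)) by (unfold rho; apply Rmin_r).
  assert (Hrho : 0 < rho).
  { unfold rho. apply Rmin_pos; [apply Rmin_pos; auto|]. apply Rdiv_lt_0_compat; lra. }
  exists rho. split; auto. intros s1 s H1 H2 HX.
  apply Rabs_def2 in H1. apply Rabs_def2 in H2.
  set (lo := Rmin s1 s). set (hi := Rmax s1 s).
  assert (Hlh : lo <= s1 <= hi /\ lo <= s <= hi /\ t0 - rho < lo /\ hi < t0 + rho /\ hi - lo < 2 * rho).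
  { unfold lo, hi, Rmin, Rmax. destruct (Rle_dec s1 s); lra. }
  destruct Hlh as (Hl1 & Hl2 & Hl3 & Hl4 & Hl5).
  assert (Hin : forall r, lo <= r <= hi -> Rabs (r - t0) < ra /\ Rabs (r - t0) < rb).
  { intros r Hr. split; apply Rabs_def1; lra. }
  assert (HT1 : -T < lo) by (destruct (HBa lo ltac:(apply Rabs_def1; lra)) as [[? ?] _]; lra).
  assert (HT2 : hi < T) by (destruct (HBa hi ltac:(apply Rabs_def1; lra)) as [[? ?] _]; lra).
  apply (step T a b a' b' a0 b0 V c p e0 Bd lo hi s1); auto.
  - intros n. apply (C1_dq T a a' n Ca).
  - intros n. apply (C1_dq T b b' n Cb).
  - intros r Hr m. destruct (Hin r Hr) as [Ia Ib].
    destruct (HBa r Ia) as [_ Xa]. destruct (HBb r Ib) as [_ Xb].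
    specialize (Xa m); specialize (Xb m). split; lra.
  - intros m. specialize (HMa m); specialize (HMb m). cbv beta in *. split; lra.
  - fold K. assert (4 * (hi - lo) * K <= 4 * (2 * rho) * K) by (apply Rmult_le_compat_r; lra).
    assert (8 * rho * K <= e0).
    { apply Rmult_le_compat_r with (r := 8 * K) in Hr3; [|lra].
      unfold Rdiv in Hr3. rewrite Rmult_assoc, Rinv_l in Hr3 by lra. lra. }
    lra.
Qed.

Lemma Lp_ext v p f g : (forall n, f n = g n) -> Lp v p g -> Lp v p f.
Proof.
  intros Hfg. destruct p as [q| |]; simpl; intros [M HM]; exists M.
  - intros N. unfold Wsum in *. rewrite (Isum_ext _ (fun n => v n * rpow (g n) q)); [apply HM|].
    intros n. rewrite Hfg. auto.
  - intros n. rewrite Hfg. auto.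
  - intros n. rewrite Hfg. auto.
Qed.

Lemma wnorm_to_Lp v p f g : (forall n, 0 <= v n) -> Rbar_le (Finite 1) p -> wnorm_finite v p f g ->
  Lp v p (fun n => Cmod (f n)) /\ Lp v p (fun n => Cmod (g n)).
Proof.
  intros Hv Hp. destruct p as [q| |]; simpl in *.
  - intros H. apply summableZ_Sbdd in H.
    2:{ intros n. apply Rmult_le_pos; auto. pose proof (rpow_ge0 (Cmod (f n)) q). pose proof (rpow_ge0 (Cmod (g n)) q). lra. }
    destruct H as [M HM]. split; exists M; intros N; (eapply Rle_trans; [|apply (HM N)]); apply Isum_le; intros n;
      pose proof (rpow_ge0 (Cmod (f n)) q); pose proof (rpow_ge0 (Cmod (g n)) q); specialize (Hv n); nra.
  - intros [M HM]. split; exists M; intros n; specialize (HM n); specialize (Hv n);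
      pose proof (Cmod_ge_0 (f n)); pose proof (Cmod_ge_0 (g n)); nra.
  - destruct Hp.
Qed.

Lemma Lp_to_wnorm v p f g : (forall n, 0 <= v n) -> Rbar_le (Finite 1) p ->
  Lp v p (fun n => Cmod (f n) + Cmod (g n)) -> wnorm_finite v p f g.
Proof.
  intros Hv Hp. destruct p as [q| |]; simpl in *.
  - intros [M HM]. apply Sbdd_summableZ.
    { intros n. apply Rmult_le_pos; auto. pose proof (rpow_ge0 (Cmod (f n)) q). pose proof (rpow_ge0 (Cmod (g n)) q). lra. }
    exists (2 * M). intros N. unfold Wsum in *.
    eapply Rle_trans.
    { apply (Isum_le _ (fun n => 2 * (v n * rpow (Cmod (f n) + Cmod (g n)) q))). intros n.
      pose proof (Cmod_ge_0 (f n)). pose proof (Cmod_ge_0 (g n)).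
      assert (rpow (Cmod (f n)) q <= rpow (Cmod (f n) + Cmod (g n)) q) by (apply rpow_le; lra).
      assert (rpow (Cmod (g n)) q <= rpow (Cmod (f n) + Cmod (g n)) q) by (apply rpow_le; lra).
      specialize (Hv n). nra. }
    rewrite Isum_scal. specialize (HM N). lra.
  - intros [M HM]. exists M. auto.
  - destruct Hp.
Qed.

Lemma wok_w w : (forall n, 1 <= w n) ->
  (exists M : R, forall n, Rabs (w (n + 1)%Z / w n) + Rabs (w n / w (n + 1)%Z) <= M) ->
  exists c, wok w c.
Proof.
  intros H1 [M HM]. exists (Rmax M 1). pose proof (Rmax_l M 1). pose proof (Rmax_r M 1).
  split; [intros n; specialize (H1 n); lra|]. split; [lra|]. split.
  - intros n. specialize (HM n). pose proof (Rabs_pos (w n / w (n + 1)%Z)).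
    pose proof (Rle_abs (w (n + 1)%Z / w n)). pose proof (H1 n).
    replace (w (n + 1)%Z) with ((w (n + 1)%Z / w n) * w n) at 1 by (field; lra). nra.
  - intros n. specialize (HM n). pose proof (Rabs_pos (w (n+1)%Z / w n)).
    pose proof (Rle_abs (w n / w (n + 1)%Z)). pose proof (H1 (n+1)%Z).
    replace (w n) with ((w n / w (n + 1)%Z) * w (n + 1)%Z) at 1 by (field; lra). nra.
Qed.

Lemma wok_sq w c : wok w c -> wok (fun n => w n ^ 2) (c ^ 2).
Proof.
  intros (Hv & Hc & H1 & H2). split; [intros n; specialize (Hv n); nra|]. split; [nra|]. split.
  - intros n. specialize (H1 n). pose proof (Hv n). pose proof (Hv (n+1)%Z).
    assert (w (n+1)%Z * w (n+1)%Z <= (c * w n) * (c * w n)) by (apply Rmult_le_compat; lra). nra.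
  - intros n. specialize (H2 n). pose proof (Hv n). pose proof (Hv (n+1)%Z).
    assert (w n * w n <= (c * w (n+1)%Z) * (c * w (n+1)%Z)) by (apply Rmult_le_compat; lra). nra.
Qed.

Lemma prod_fin w q a0 b0 : (forall n, 0 <= w n) -> 1 <= q ->
  wnorm_finite w (Finite (2 * q)) a0 b0 -> Lp w (Finite q) (fun n => Cmod (a0 n) * Cmod (b0 n)).
Proof.
  intros Hw Hq H. simpl in *. apply summableZ_Sbdd in H.
  2:{ intros n. apply Rmult_le_pos; auto. pose proof (rpow_ge0 (Cmod (a0 n)) (2*q)). pose proof (rpow_ge0 (Cmod (b0 n)) (2*q)). lra. }
  destruct H as [M HM]. exists M. intros N. eapply Rle_trans; [|apply (HM N)]. apply Isum_le. intros n.
  apply Rmult_le_compat_l; auto.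
  set (x := Cmod (a0 n)). set (y := Cmod (b0 n)).
  assert (Hx : 0 <= x) by apply Cmod_ge_0. assert (Hy : 0 <= y) by apply Cmod_ge_0.
  pose proof (Rmax_l x y). pose proof (Rmax_r x y). set (m := Rmax x y) in *.
  assert (rpow (x * y) q <= rpow (m * m) q) by (apply rpow_le; [lra|split; [nra|apply Rmult_le_compat; lra]]).
  rewrite rpow_sq in H1 by lra.
  assert (rpow m (2 * q) <= rpow x (2 * q) + rpow y (2 * q)).
  { unfold m, Rmax. destruct (Rle_dec x y); pose proof (rpow_ge0 x (2*q)); pose proof (rpow_ge0 y (2*q)); lra. }
  lra.
Qed.

Lemma prod_inf w a0 b0 : (forall n, 0 <= w n) ->
  wnorm_finite w p_infty a0 b0 -> Lp (fun n => w n ^ 2) p_infty (fun n => Cmod (a0 n) * Cmod (b0 n)).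
Proof.
  intros Hw [M HM]. exists (M * M). intros n. specialize (HM n). specialize (Hw n).
  pose proof (Cmod_ge_0 (a0 n)). pose proof (Cmod_ge_0 (b0 n)).
  assert (w n * Cmod (a0 n) <= M) by nra. assert (w n * Cmod (b0 n) <= M) by nra.
  assert ((w n * Cmod (a0 n)) * (w n * Cmod (b0 n)) <= M * M) by (apply Rmult_le_compat; nra).
  replace (w n ^ 2 * (Cmod (a0 n) * Cmod (b0 n))) with ((w n * Cmod (a0 n)) * (w n * Cmod (b0 n))) by ring.
  auto.
Qed.

Lemma Dd_Lp V c p a0 b0 : wok V c -> Rbar_le (Finite 1) p ->
  Lp V p (fun n => Cmod (Cminus (a0 n) (shiftp a0 n))) ->
  Lp V p (fun n => Cmod (Cminus (b0 n) (shiftp b0 n))) ->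
  Lp V p (fun n => Cmod (a0 n) * Cmod (b0 n)) ->
  forall Bd, 0 <= Bd -> Lp V p (Dd a0 b0 Bd).
Proof.
  intros Hw Hp LA LB LP Bd HB. pose proof Hw as (Hv & _ & _ & _).
  assert (Hv' : forall n, 0 <= V n) by (intros n; left; auto).
  assert (LA1 : Lp V p (fun n => Cmod (Cminus (a0 (n + 1)%Z) (a0 n)))).
  { apply (Lp_ext _ _ _ _ (fun n => Cmod_minus_sym _ _)). exact LA. }
  assert (LB1 : Lp V p (fun n => Cmod (Cminus (b0 (n + 1)%Z) (b0 n)))).
  { apply (Lp_ext _ _ _ _ (fun n => Cmod_minus_sym _ _)). exact LB. }
  assert (LA2 : Lp V p (fun n => Cmod (Cminus (a0 (n - 1)%Z) (a0 n)))).
  { apply (Lp_ext _ _ _ (fun n => Cmod (Cminus (a0 (n - 1)%Z) (shiftp a0 (n - 1)%Z)))).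
    - intros n. unfold shiftp. replace (n - 1 + 1)%Z with n by lia. auto.
    - apply (Lp_shiftm V c p (fun n => Cmod (Cminus (a0 n) (shiftp a0 n)))); auto. intros; apply Cmod_ge_0. }
  assert (LB2 : Lp V p (fun n => Cmod (Cminus (b0 (n - 1)%Z) (b0 n)))).
  { apply (Lp_ext _ _ _ (fun n => Cmod (Cminus (b0 (n - 1)%Z) (shiftp b0 (n - 1)%Z)))).
    - intros n. unfold shiftp. replace (n - 1 + 1)%Z with n by lia. auto.
    - apply (Lp_shiftm V c p (fun n => Cmod (Cminus (b0 n) (shiftp b0 n)))); auto. intros; apply Cmod_ge_0. }
  unfold Dd.
  apply (Lp_plus V p (fun n => Cmod (Cminus (a0 (n - 1)%Z) (a0 n)) + Cmod (Cminus (a0 (n + 1)%Z) (a0 n)) +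
      Cmod (Cminus (b0 (n - 1)%Z) (b0 n)) + Cmod (Cminus (b0 (n + 1)%Z) (b0 n)))
      (fun n => 2 * Bd * (Cmod (a0 n) * Cmod (b0 n)))); auto.
  - intros n. repeat apply Rplus_le_le_0_compat; apply Cmod_ge_0.
  - intros n. apply Rmult_le_pos; [lra|]. apply Rmult_le_pos; apply Cmod_ge_0.
  - repeat (apply Lp_plus; auto; try (intros; repeat apply Rplus_le_le_0_compat; apply Cmod_ge_0)).
  - apply (Lp_scal V p (2 * Bd) (fun n => Cmod (a0 n) * Cmod (b0 n))); auto; [lra|].
    intros n. apply Rmult_le_pos; apply Cmod_ge_0.
Qed.

Lemma X0_Lp V p a b a0 b0 ta0 tb0 : (forall n, 0 <= V n) -> Rbar_le (Finite 1) p ->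
  (forall n, a n 0 = Cplus (a0 n) (ta0 n)) -> (forall n, b n 0 = Cplus (b0 n) (tb0 n)) ->
  wnorm_finite V p ta0 tb0 -> Lp V p (Xf a b a0 b0 0).
Proof.
  intros Hv Hp Ha Hb H. destruct (wnorm_to_Lp V p ta0 tb0 Hv Hp H) as [L1 L2].
  apply (Lp_ext _ _ _ (fun n => Cmod (ta0 n) + Cmod (tb0 n))).
  - intros n. unfold Xf. rewrite Ha, Hb. f_equal; f_equal; ring.
  - apply Lp_plus; auto; intros; apply Cmod_ge_0.
Qed.

Theorem theorem2p4
  (w : Z -> R)
  (Hw1 : forall n, 1 <= w n)
  (Hwq : exists M : R, forall n,
           Rabs (w (n + 1)%Z / w n) + Rabs (w n / w (n + 1)%Z) <= M)
  (p : Rbar) (Hp : Rbar_le (Finite 1) p)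
  (a0 b0 ta0 tb0 : Z -> C)
  (Hba0 : bounded_seq a0) (Hbb0 : bounded_seq b0)
  (Hbta0 : bounded_seq ta0) (Hbtb0 : bounded_seq tb0)
  (Hdata : match p with
           | Finite q =>
               wnorm_finite w (Finite (2 * q)) a0 b0 /\
               wnorm_finite w p (fun n => Cminus (a0 n) (shiftp a0 n))
                                (fun n => Cminus (b0 n) (shiftp b0 n)) /\
               wnorm_finite w p ta0 tb0
           | _ =>
               wnorm_finite w p_infty a0 b0 /\
               wnorm_finite (fun n => w n ^ 2) p_infty
                 (fun n => Cminus (a0 n) (shiftp a0 n))
                 (fun n => Cminus (b0 n) (shiftp b0 n)) /\
               wnorm_finite (fun n => w n ^ 2) p_infty ta0 tb0
           end)
  (T : R) (HT : 0 < T)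
  (a b : Z -> R -> C)
  (Hsol : AL_solution T a b)
  (Ha0 : forall n, a n 0 = Cplus (a0 n) (ta0 n))
  (Hb0 : forall n, b n 0 = Cplus (b0 n) (tb0 n)) :
  forall t, -T < t < T ->
    match p with
    | Finite q => wnorm_finite w p (fun n => Cminus (a n t) (a0 n))
                                   (fun n => Cminus (b n t) (b0 n))
    | _ => wnorm_finite (fun n => w n ^ 2) p_infty
             (fun n => Cminus (a n t) (a0 n)) (fun n => Cminus (b n t) (b0 n))
    end.
Proof.
  intros t Ht. destruct Hsol as (a' & b' & Ca & Cb & Heqs).
  assert (Heq : forall n t, -T < t < T -> ALeq a b a' b' n t) by exact Heqs.
  destruct (wok_w w Hw1 Hwq) as [c Hc].
  assert (Hw0 : forall n, 0 <= w n) by (intros n; specialize (Hw1 n); lra).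
  destruct p as [q| |].
  - destruct Hdata as [D1 [D2 D3]].
    destruct (wnorm_to_Lp w _ _ _ Hw0 Hp D2) as [LA LB].
    assert (HL := local_prop T a b a' b' a0 b0 w c (Finite q) Ca Cb Heq Hc Hp Hba0 Hbb0
                    (Dd_Lp w c (Finite q) a0 b0 Hc Hp LA LB (prod_fin w q a0 b0 Hw0 Hp D1))).
    assert (HG0 := X0_Lp w (Finite q) a b a0 b0 ta0 tb0 Hw0 Hp Ha0 Hb0 D3).
    assert (HGt := connect_all T _ t HL HG0 Ht).
    apply Lp_to_wnorm; auto.
  - destruct Hdata as [D1 [D2 D3]].
    assert (Hc2 := wok_sq w c Hc).
    assert (Hw2 : forall n, 0 <= w n ^ 2) by (intros n; apply pow2_ge_0).
    destruct (wnorm_to_Lp _ _ _ _ Hw2 Hp D2) as [LA LB].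
    assert (HL := local_prop T a b a' b' a0 b0 (fun n => w n ^ 2) (c ^ 2) p_infty Ca Cb Heq Hc2 Hp Hba0 Hbb0
                    (Dd_Lp _ (c ^ 2) p_infty a0 b0 Hc2 Hp LA LB (prod_inf w a0 b0 Hw0 D1))).
    assert (HG0 := X0_Lp _ p_infty a b a0 b0 ta0 tb0 Hw2 Hp Ha0 Hb0 D3).
    assert (HGt := connect_all T _ t HL HG0 Ht).
    apply Lp_to_wnorm; auto.
  - destruct Hp.
Qed.
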